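(* Let $\Omega\subset\mathbb{R}^n$ be a bounded, uniformly (strictly) convex domain with smooth boundary and diameter $d$, and $\rho(x)=\operatorname{dist}(x,\partial\Omega)$. Let $\tilde V\in C^1([-\tfrac d2,\tfrac d2])$ be even, $\tilde\phi_1>0$ the first Dirichlet eigenfunction of $-\tilde u''+\tilde V\tilde u=\tilde\lambda\tilde u$ on $(-\tfrac d2,\tfrac d2)$, $\tilde u(\pm\tfrac d2)=0$, and $\Phi(s):=2(\tilde\phi_1'/\tilde\phi_1)(s/2)$ for $s\in[0,d)$. Then there exist constants $\kappa=\kappa(n,\Omega)>0$ and $c_0=c_0(n,\Omega,\tilde V,\tilde\phi_1)$ such that for every $x\neq y$ in $\Omega$, with $X=|y-x|$ and $\tilde X=(y-x)/|y-x|$, $$\big[\nabla\log\rho^\kappa(y)-\nabla\log\rho^\kappa(x)\big]\cdot\tilde X\ \le\ \Phi(X)+c_0X.$$ *)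

(* Defs.v *)
(* classical reals. Points of R^n are represented as
   functions nat -> R whose coordinates of index >= n vanish (inRn). *)
From Stdlib Require Import Reals List.
Import ListNotations.
Open Scope R_scope.

Definition vec := nat -> R.

Fixpoint sumR (n : nat) (f : nat -> R) : R :=
  match n with O => 0 | S m => sumR m f + f m end.

Definition dot (n : nat) (x y : vec) : R := sumR n (fun i => x i * y i).
Definition vnorm (n : nat) (x : vec) : R := sqrt (dot n x x).
Definition vadd (x y : vec) : vec := fun i => x i + y i.
Definition vsub (x y : vec) : vec := fun i => x i - y i.
Definition vscale (t : R) (x : vec) : vec := fun i => t * x i.
Definition vdist (n : nat) (x y : vec) : R := vnorm n (vsub x y).
Definition unit_vec (i : nat) : vec := fun j => if Nat.eqb j i then 1 else 0.

Definition inRn (n : nat) (x : vec) : Prop := forall i, (n <= i)%nat -> x i = 0.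

Definition ball (n : nat) (p : vec) (r : R) (x : vec) : Prop :=
  inRn n x /\ vdist n x p < r.

Definition is_open (n : nat) (S : vec -> Prop) : Prop :=
  forall x, S x -> inRn n x /\
    exists r, 0 < r /\ forall y, ball n x r y -> S y.

Definition bounded_set (n : nat) (S : vec -> Prop) : Prop :=
  exists M, forall x, S x -> vnorm n x <= M.

Definition convex_set (S : vec -> Prop) : Prop :=
  forall x y t, S x -> S y -> 0 <= t <= 1 ->
    S (vadd (vscale (1 - t) x) (vscale t y)).

Definition boundary (n : nat) (S : vec -> Prop) (x : vec) : Prop :=
  inRn n x /\ forall r, 0 < r ->
    (exists y, S y /\ vdist n y x < r) /\
    (exists y, inRn n y /\ ~ S y /\ vdist n y x < r).

Definition diameter (n : nat) (S : vec -> Prop) (d : R) : Prop :=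
  is_lub (fun t => exists x y, S x /\ S y /\ t = vdist n x y) d.

Definition is_glb (E : R -> Prop) (m : R) : Prop :=
  (forall t, E t -> m <= t) /\ (forall b, (forall t, E t -> b <= t) -> b <= m).

Definition dist_to_boundary (n : nat) (Om : vec -> Prop) (rho : vec -> R) : Prop :=
  forall x, Om x -> is_glb (fun t => exists z, boundary n Om z /\ t = vdist n x z) (rho x).

Definition has_partial (f : vec -> R) (i : nat) (x : vec) (l : R) : Prop :=
  derivable_pt_lim (fun t => f (vadd x (vscale t (unit_vec i)))) 0 l.

Definition cont_at (n : nat) (f : vec -> R) (x : vec) : Prop :=
  forall eps, 0 < eps -> exists delta, 0 < delta /\
    forall y, ball n x delta y -> Rabs (f y - f x) < eps.

(* D al = iterated partial derivative of D [] along the multi-index al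
   (D (i :: al) = d_i (D al)); all of them exist and are continuous on U:
   D [] is C^infinity on U. *)
Definition smooth_family (n : nat) (U : vec -> Prop) (D : list nat -> vec -> R) : Prop :=
  forall al x, U x -> cont_at n (D al) x /\
    forall i, (i < n)%nat -> has_partial (D al) i x (D (i :: al) x).

(* Om has C^infinity boundary and is uniformly convex: near each boundary
   point p, Om is given by {F < 0} for a smooth local defining function F
   with nonvanishing gradient at p, and the second fundamental form
   D^2F(p)(xi,xi)/|grad F(p)| on tangent vectors xi is >= c |xi|^2 with
   c > 0 independent of p. *)
Definition smooth_uniformly_convex_boundary (n : nat) (Om : vec -> Prop) : Prop :=
  exists c, 0 < c /\ forall p, boundary n Om p ->
    exists r D, 0 < r /\ smooth_family n (ball n p r) D /\
      (exists i, (i < n)%nat /\ D [i] p <> 0) /\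
      (forall x, ball n p r x -> (Om x <-> D nil x < 0)) /\
      (forall xi, inRn n xi ->
         sumR n (fun i => D [i] p * xi i) = 0 ->
         sumR n (fun i => sumR n (fun j => D [j; i] p * xi i * xi j))
           >= c * vnorm n (fun i => D [i] p) * dot n xi xi).

Definition has_gradient (n : nat) (f : vec -> R) (x g : vec) : Prop :=
  forall eps, 0 < eps -> exists delta, 0 < delta /\
    forall y, ball n x delta y ->
      Rabs (f y - f x - dot n g (vsub y x)) <= eps * vdist n y x.

Definition cont_within (a b : R) (f : R -> R) (s : R) : Prop :=
  forall eps, 0 < eps -> exists delta, 0 < delta /\
    forall t, a <= t <= b -> Rabs (t - s) < delta -> Rabs (f t - f s) < eps.

Definition deriv_within (a b : R) (f : R -> R) (s l : R) : Prop :=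
  forall eps, 0 < eps -> exists delta, 0 < delta /\
    forall t, a <= t <= b -> Rabs (t - s) < delta ->
      Rabs (f t - f s - l * (t - s)) <= eps * Rabs (t - s).

Definition C1_on (a b : R) (f : R -> R) : Prop :=
  exists df, forall s, a <= s <= b ->
    deriv_within a b f s (df s) /\ cont_within a b df s.

Definition dirichlet_eigenpair (a : R) (V : R -> R) (lam : R)
    (u du ddu : R -> R) : Prop :=
  (forall s, -a <= s <= a -> cont_within (-a) a u s) /\
  u (-a) = 0 /\ u a = 0 /\
  (forall s, -a < s < a ->
     derivable_pt_lim u s (du s) /\ derivable_pt_lim du s (ddu s) /\
     - ddu s + V s * u s = lam * u s) /\
  (exists s, -a < s < a /\ u s <> 0).

Definition Phi_of (phi dphi : R -> R) (s : R) : R :=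
  2 * (dphi (s / 2) / phi (s / 2)).

(* Main.v *)
Require Import Defs.
From Stdlib Require Import Reals Lra Lia Psatz FunctionalExtensionality List IndefiniteDescription Classical.
Import ListNotations.
Open Scope R_scope.

Lemma sumR_ext n f g : (forall i, (i < n)%nat -> f i = g i) -> sumR n f = sumR n g.
Proof. induction n; simpl; intros; auto. rewrite IHn by (intros; apply H; lia). rewrite H by lia; auto. Qed.
Lemma sumR_plus n f g : sumR n (fun i => f i + g i) = sumR n f + sumR n g.
Proof. induction n; simpl; [lra|rewrite IHn; lra]. Qed.
Lemma sumR_scal n c f : sumR n (fun i => c * f i) = c * sumR n f.
Proof. induction n; simpl; [lra|rewrite IHn; lra]. Qed.
Lemma sumR_zero n : sumR n (fun _ => 0) = 0.
Proof. induction n; simpl; [lra|rewrite IHn; lra]. Qed.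
Lemma sumR_le n f g : (forall i, (i < n)%nat -> f i <= g i) -> sumR n f <= sumR n g.
Proof. induction n; simpl; intros; [lra|]. assert (f n <= g n) by (apply H; lia).
  assert (sumR n f <= sumR n g) by (apply IHn; intros; apply H; lia). lra. Qed.
Lemma sumR_nonneg n f : (forall i, (i < n)%nat -> 0 <= f i) -> 0 <= sumR n f.
Proof. intros. rewrite <- (sumR_zero n). apply sumR_le; auto. Qed.
Lemma sumR_pos n f i : (forall i, (i < n)%nat -> 0 <= f i) -> (i < n)%nat -> 0 < f i -> 0 < sumR n f.
Proof. induction n; simpl; intros; [lia|].
  assert (0 <= sumR n f) by (apply sumR_nonneg; intros; apply H; lia).
  assert (0 <= f n) by (apply H; lia).
  destruct (Nat.eq_dec i n). subst; lra.
  assert (0 < sumR n f) by (apply IHn; auto; lia). lra. Qed.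
Lemma sumR_abs n f : Rabs (sumR n f) <= sumR n (fun i => Rabs (f i)).
Proof. induction n; simpl. rewrite Rabs_R0; lra.
  eapply Rle_trans. apply Rabs_triang. lra. Qed.

Lemma dot_sym n x y : dot n x y = dot n y x.
Proof. unfold dot. apply sumR_ext; intros; ring. Qed.
Lemma dot_nonneg n x : 0 <= dot n x x.
Proof. apply sumR_nonneg; intros; nra. Qed.
Lemma dot_add_l n x y z : dot n (vadd x y) z = dot n x z + dot n y z.
Proof. unfold dot, vadd. rewrite <- sumR_plus. apply sumR_ext; intros; ring. Qed.
Lemma dot_sub_l n x y z : dot n (vsub x y) z = dot n x z - dot n y z.
Proof. unfold dot, vsub. assert (sumR n (fun i => x i * z i) - sumR n (fun i => y i * z i)
  = sumR n (fun i => x i * z i) + sumR n (fun i => (-1) * (y i * z i))) as ->.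
  rewrite sumR_scal; ring. rewrite <- sumR_plus. apply sumR_ext; intros; ring. Qed.
Lemma dot_scale_l n c x z : dot n (vscale c x) z = c * dot n x z.
Proof. unfold dot, vscale. rewrite <- sumR_scal. apply sumR_ext; intros; ring. Qed.
Lemma dot_scale_r n c x z : dot n z (vscale c x) = c * dot n z x.
Proof. rewrite dot_sym, dot_scale_l, dot_sym; auto. Qed.
Lemma dot_add_r n x y z : dot n z (vadd x y) = dot n z x + dot n z y.
Proof. rewrite dot_sym, dot_add_l, !(dot_sym n z); auto. Qed.
Lemma dot_sub_r n x y z : dot n z (vsub x y) = dot n z x - dot n z y.
Proof. rewrite dot_sym, dot_sub_l, !(dot_sym n z); auto. Qed.

Lemma vnorm_nonneg n x : 0 <= vnorm n x.
Proof. apply sqrt_pos. Qed.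
Lemma vnorm_sq n x : vnorm n x * vnorm n x = dot n x x.
Proof. apply sqrt_sqrt, dot_nonneg. Qed.
Lemma vnorm_scale n c x : vnorm n (vscale c x) = Rabs c * vnorm n x.
Proof. unfold vnorm. rewrite dot_scale_l, dot_scale_r.
  replace (c * (c * dot n x x)) with (Rsqr (Rabs c) * dot n x x).
  rewrite sqrt_mult_alt, sqrt_Rsqr; auto. apply Rabs_pos. apply Rle_0_sqr.
  rewrite <- Rsqr_abs; unfold Rsqr; ring. Qed.

Lemma cauchy_schwarz n x y : Rabs (dot n x y) <= vnorm n x * vnorm n y.
Proof.
  pose proof (vnorm_sq n x) as Hx. pose proof (vnorm_sq n y) as Hy.
  pose proof (vnorm_nonneg n x). pose proof (vnorm_nonneg n y).
  assert (forall t, 0 <= dot n x x - 2 * t * dot n x y + t * t * dot n y y).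
  { intro t. pose proof (dot_nonneg n (vsub x (vscale t y))) as H3.
    rewrite dot_sub_l, !dot_sub_r, !dot_scale_l, !dot_scale_r, (dot_sym n y x) in H3. lra. }
  assert (Rsqr (dot n x y) <= Rsqr (vnorm n x * vnorm n y)).
  { unfold Rsqr. 
    destruct (Req_dec (dot n y y) 0).
    - assert (dot n x y = 0).
      { destruct (Req_dec (dot n x y) 0); auto.
        specialize (H1 ((dot n x x + 1) / (2 * dot n x y))). rewrite H2 in H1.
        assert (2 * ((dot n x x + 1) / (2 * dot n x y)) * dot n x y = dot n x x + 1) by (field; auto).
        lra. }
      rewrite H3. nra.
    - specialize (H1 (dot n x y / dot n y y)).
      assert (0 < dot n y y) by (pose proof (dot_nonneg n y); lra).
      replace (dot n x x - 2 * (dot n x y / dot n y y) * dot n x y +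
        dot n x y / dot n y y * (dot n x y / dot n y y) * dot n y y)
      with (dot n x x - dot n x y * dot n x y / dot n y y) in H1 by (field; lra).
      assert (dot n x y * dot n x y <= dot n x x * dot n y y).
      { assert (dot n x y * dot n x y = (dot n x y * dot n x y / dot n y y) * dot n y y) by (field; lra).
        rewrite H4. apply Rmult_le_compat_r; lra. }
      nra. }
  apply Rsqr_le_abs_0 in H2. rewrite (Rabs_right (vnorm n x * vnorm n y)) in H2 by nra. auto.
Qed.

Lemma vnorm_triang n x y : vnorm n (vadd x y) <= vnorm n x + vnorm n y.
Proof.
  pose proof (vnorm_nonneg n x). pose proof (vnorm_nonneg n y). pose proof (vnorm_nonneg n (vadd x y)).
  apply Rsqr_incr_0_var; [|nra]. unfold Rsqr. rewrite vnorm_sq, dot_add_l, !dot_add_r.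
  pose proof (cauchy_schwarz n x y). pose proof (Rle_abs (dot n x y)).
  rewrite (dot_sym n y x). pose proof (vnorm_sq n x). pose proof (vnorm_sq n y). nra.
Qed.

Lemma vsub_add_sub x y z : vsub x z = vadd (vsub x y) (vsub y z).
Proof. apply functional_extensionality; intro i; unfold vsub, vadd; ring. Qed.
Lemma vdist_triang n x y z : vdist n x z <= vdist n x y + vdist n y z.
Proof. unfold vdist. rewrite (vsub_add_sub x y z). apply vnorm_triang. Qed.
Lemma vdist_sym n x y : vdist n x y = vdist n y x.
Proof. unfold vdist. replace (vsub y x) with (vscale (-1) (vsub x y)).
  rewrite vnorm_scale. replace (Rabs (-1)) with 1 by (rewrite Rabs_left; lra). ring.
  apply functional_extensionality; intro i; unfold vsub, vscale; ring. Qed.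
Lemma vdist_nonneg n x y : 0 <= vdist n x y.
Proof. apply vnorm_nonneg. Qed.

Lemma coord_le_norm n x i : (i < n)%nat -> Rabs (x i) <= vnorm n x.
Proof. intros. rewrite <- (Rabs_right (vnorm n x)) by (apply Rle_ge, vnorm_nonneg).
  apply Rsqr_le_abs_0. unfold Rsqr. rewrite vnorm_sq. unfold dot.
  induction n; [lia|]. simpl. destruct (Nat.eq_dec i n).
  subst. pose proof (sumR_nonneg n (fun i => x i * x i)). assert (0 <= sumR n (fun i0 : nat => x i0 * x i0)) by (apply H0; intros; nra). lra.
  pose proof (IHn ltac:(lia)). nra. Qed.

Lemma norm_small n x eps : 0 <= eps -> (forall i, (i < n)%nat -> Rabs (x i) <= eps) ->
  vnorm n x <= INR n * eps.
Proof. intros. pose proof (vnorm_nonneg n x).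
  assert (0 <= INR n) by apply pos_INR.
  apply Rsqr_incr_0_var; [|nra]. unfold Rsqr. rewrite vnorm_sq. unfold dot.
  assert (sumR n (fun i => x i * x i) <= sumR n (fun _ => eps * eps)).
  { apply sumR_le; intros. specialize (H0 i H3). 
    replace (x i * x i) with (Rabs (x i) * Rabs (x i)) by (rewrite <- Rabs_mult; apply Rabs_right; nra).
    pose proof (Rabs_pos (x i)). nra. }
  assert (sumR n (fun _ => eps * eps) = INR n * (eps * eps)).
  { clear. induction n. simpl; lra. change (sumR (S n) (fun _ => eps * eps)) with (sumR n (fun _ => eps * eps) + eps * eps). rewrite IHn, S_INR. ring. }
  assert (INR n * (eps*eps) <= INR n * eps * (INR n * eps)).
  { destruct n. simpl; lra. assert (1 <= INR (S n)) by (rewrite S_INR; pose proof (pos_INR n); lra). nra. }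
  lra. Qed.

Definition inRn_ok := inRn.
Lemma inRn_add n x y : inRn n x -> inRn n y -> inRn n (vadd x y).
Proof. unfold inRn, vadd; intros; rewrite H, H0; auto; ring. Qed.
Lemma inRn_sub n x y : inRn n x -> inRn n y -> inRn n (vsub x y).
Proof. unfold inRn, vsub; intros; rewrite H, H0; auto; ring. Qed.
Lemma inRn_scale n c x : inRn n x -> inRn n (vscale c x).
Proof. unfold inRn, vscale; intros; rewrite H; auto; ring. Qed.

Ltac dcases := repeat match goal with
  | |- context [Rle_dec ?x ?y] => destruct (Rle_dec x y)
  | H : context [Rle_dec ?x ?y] |- _ => destruct (Rle_dec x y)
  | |- context [Rcase_abs ?x] => destruct (Rcase_abs x)
  | H : context [Rcase_abs ?x] |- _ => destruct (Rcase_abs x)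
  end.

Lemma dmult f g x lf lg : derivable_pt_lim f x lf -> derivable_pt_lim g x lg ->
  derivable_pt_lim (fun y => f y * g y) x (lf * g x + f x * lg).
Proof. intros; apply (derivable_pt_lim_mult f g); auto. Qed.
Lemma dplus f g x lf lg : derivable_pt_lim f x lf -> derivable_pt_lim g x lg ->
  derivable_pt_lim (fun y => f y + g y) x (lf + lg).
Proof. intros; apply (derivable_pt_lim_plus f g); auto. Qed.
Lemma dminus f g x lf lg : derivable_pt_lim f x lf -> derivable_pt_lim g x lg ->
  derivable_pt_lim (fun y => f y - g y) x (lf - lg).
Proof. intros; apply (derivable_pt_lim_minus f g); auto. Qed.
Lemma ddiv f g x lf lg : derivable_pt_lim f x lf -> derivable_pt_lim g x lg -> g x <> 0 ->
  derivable_pt_lim (fun y => f y / g y) x ((lf * g x - lg * f x) / (g x * g x)).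
Proof. intros; apply (derivable_pt_lim_div f g); auto. Qed.
Lemma dconst c x : derivable_pt_lim (fun _ => c) x 0.
Proof. apply (derivable_pt_lim_const c). Qed.
Lemma did x : derivable_pt_lim (fun y => y) x 1.
Proof. apply derivable_pt_lim_id. Qed.
Lemma dexp_comp f x l : derivable_pt_lim f x l -> derivable_pt_lim (fun y => exp (f y)) x (exp (f x) * l).
Proof. intros. apply (derivable_pt_lim_comp f exp); auto. apply derivable_pt_lim_exp. Qed.
Lemma dval f x l l' : derivable_pt_lim f x l -> l = l' -> derivable_pt_lim f x l'.
Proof. intros; subst; auto. Qed.
Lemma dlocal f g x l r : 0 < r -> (forall y, Rabs (y - x) < r -> f y = g y) ->
  derivable_pt_lim f x l -> derivable_pt_lim g x l.
Proof. intros Hr Hfg Hd eps Heps. destruct (Hd eps Heps) as [del Hdel].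
  assert (0 < Rmin del r) by (apply Rmin_pos; [apply cond_pos|auto]).
  exists (mkposreal _ H). intros h Hh Hh2. simpl in Hh2.
  rewrite <- !Hfg. apply Hdel; auto. eapply Rlt_le_trans; [apply Hh2|apply Rmin_l].
  replace (x - x) with 0 by ring; rewrite Rabs_R0; auto.
  replace (x + h - x) with h by ring. eapply Rlt_le_trans; [apply Hh2|apply Rmin_r]. Qed.
Lemma dopp_arg f x l : derivable_pt_lim f (- x) l -> derivable_pt_lim (fun y => f (- y)) x (- l).
Proof. intros Hd eps Heps. destruct (Hd eps Heps) as [del Hdel]. exists del. intros h Hh Hh2.
  specialize (Hdel (- h)). replace (- (x + h)) with (- x + - h) by ring.
  replace ((f (- x + - h) - f (- x)) / h - - l) with (- ((f (- x + - h) - f (- x)) / - h - l)) by (field; auto).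
  rewrite Rabs_Ropp. apply Hdel. lra. rewrite Rabs_Ropp; auto. Qed.
Lemma dshift f c l : derivable_pt_lim (fun s => f (c + s)) 0 l -> derivable_pt_lim f c l.
Proof. intros Hd eps Heps. destruct (Hd eps Heps) as [del Hdel]. exists del. intros h Hh Hh2.
  specialize (Hdel h Hh Hh2). rewrite Rplus_0_l, Rplus_0_r in Hdel. auto. Qed.
Lemma dunshift f c l : derivable_pt_lim f c l -> derivable_pt_lim (fun s => f (c + s)) 0 l.
Proof. intros Hd eps Heps. destruct (Hd eps Heps) as [del Hdel]. exists del. intros h Hh Hh2.
  rewrite Rplus_0_l, Rplus_0_r. auto. Qed.

Lemma cont_pt_intro f x : (forall eps, 0 < eps -> exists del, 0 < del /\
  forall y, Rabs (y - x) < del -> Rabs (f y - f x) < eps) -> continuity_pt f x.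
Proof. intros H eps Heps. destruct (H eps Heps) as [del [Hdel Hy]]. exists del; split; auto.
  intros y [_ Hy2]. apply Hy. apply Hy2. Qed.

Lemma dcont f x l : derivable_pt_lim f x l -> continuity_pt f x.
Proof. intros. apply derivable_continuous_pt. exists l; auto. Qed.

Lemma cont_within_bounded a b f : a <= b -> (forall s, a <= s <= b -> cont_within a b f s) ->
  exists B, forall s, a <= s <= b -> Rabs (f s) <= B.
Proof.
  intros Hab Hc. set (cl := fun s => Rmax a (Rmin b s)).
  assert (Hcl : forall s, a <= cl s <= b).
  { intros; unfold cl; split. apply Rmax_l. apply Rmax_lub; auto. apply Rmin_l. }
  assert (Hcl2 : forall s, a <= s <= b -> cl s = s).
  { intros; unfold cl. rewrite Rmin_right by lra. rewrite Rmax_right; lra. }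
  assert (Hlip : forall s t, Rabs (cl t - cl s) <= Rabs (t - s)).
  { intros; unfold cl, Rmax, Rmin, Rabs; dcases; lra. }
  set (g := fun s => f (cl s)).
  assert (Hg : forall c, continuity_pt g c).
  { intro c. apply cont_pt_intro. intros eps Heps. destruct (Hc (cl c) (Hcl c) eps Heps) as [del [Hdel Ht]].
    exists del; split; auto. intros y Hy. apply Ht. apply Hcl. eapply Rle_lt_trans; [apply Hlip|auto]. }
  destruct (continuity_ab_maj g a b Hab (fun c _ => Hg c)) as [M [HM _]].
  destruct (continuity_ab_min g a b Hab (fun c _ => Hg c)) as [m [Hm _]].
  exists (Rmax (Rabs (g M)) (Rabs (g m))). intros s Hs.
  specialize (HM s Hs). specialize (Hm s Hs). unfold g in *. rewrite (Hcl2 s Hs) in HM, Hm.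
  clear -HM Hm. unfold Rmax, Rabs in *; dcases; lra.
Qed.

Lemma deriv_within_cont a b f s l : deriv_within a b f s l -> cont_within a b f s.
Proof. intros H eps Heps. destruct (H 1 ltac:(lra)) as [del [Hdel Ht]].
  exists (Rmin del (eps / (Rabs l + 1))). split. apply Rmin_pos; auto. apply Rdiv_lt_0_compat; auto. pose proof (Rabs_pos l); lra.
  intros t Ht1 Ht2. specialize (Ht t Ht1 (Rlt_le_trans _ _ _ Ht2 (Rmin_l _ _))).
  pose proof (Rmin_r del (eps / (Rabs l + 1))). pose proof (Rabs_pos l).
  assert (Rabs (t - s) * (Rabs l + 1) < eps).
  { apply Rlt_le_trans with (eps / (Rabs l + 1) * (Rabs l + 1)). apply Rmult_lt_compat_r; lra.
    right; field; lra. }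
  pose proof (Rabs_triang (f t - f s - l * (t - s)) (l * (t - s))). rewrite Rabs_mult in H3.
  replace (f t - f s - l * (t - s) + l * (t - s)) with (f t - f s) in H3 by ring. nra.
Qed.
Definition ODE a V lam phi dphi ddphi : Prop :=
  0 < a /\ (forall s, -a <= s <= a -> cont_within (-a) a V s) /\
  (forall s, -a <= s <= a -> V (-s) = V s) /\
  dirichlet_eigenpair a V lam phi dphi ddphi /\ (forall s, -a < s < a -> 0 < phi s).

Lemma ode_d a V lam phi dphi ddphi : ODE a V lam phi dphi ddphi -> forall s, -a < s < a ->
  derivable_pt_lim phi s (dphi s) /\ derivable_pt_lim dphi s (ddphi s) /\ ddphi s = (V s - lam) * phi s.
Proof. intros [Ha [HV [Hev [[Hc [H0 [H1 [Hd _]]]] Hp]]]] s Hs. destruct (Hd s Hs) as [A [B C]].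
  repeat split; auto. lra. Qed.

Lemma ode_bounds a V lam phi dphi ddphi : ODE a V lam phi dphi ddphi ->
  exists L Bp M P, 0 <= L /\ 0 <= Bp /\ 0 <= M /\ 0 <= P /\
  (forall s, -a <= s <= a -> Rabs (V s - lam) <= L) /\
  (forall s, -a <= s <= a -> Rabs (phi s) <= Bp) /\
  (forall s, -a < s < a -> Rabs (ddphi s) <= M) /\
  (forall s, -a < s < a -> Rabs (dphi s) <= P).
Proof.
  intros HO. pose proof (ode_d _ _ _ _ _ _ HO) as Hd.
  destruct HO as [Ha [HV [Hev [[Hc [H0 [H1 [_ _]]]] Hp]]]].
  destruct (cont_within_bounded (-a) a V ltac:(lra) HV) as [BV HBV].
  destruct (cont_within_bounded (-a) a phi ltac:(lra) Hc) as [Bp HBp].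
  assert (0 <= BV) by (specialize (HBV 0 ltac:(lra)); pose proof (Rabs_pos (V 0)); lra).
  assert (0 <= Bp) by (specialize (HBp 0 ltac:(lra)); pose proof (Rabs_pos (phi 0)); lra).
  set (L := BV + Rabs lam). assert (0 <= L) by (unfold L; pose proof (Rabs_pos lam); lra).
  assert (HL : forall s, -a <= s <= a -> Rabs (V s - lam) <= L).
  { intros s Hs. unfold L. specialize (HBV s Hs). pose proof (Rabs_triang (V s) (- lam)) as HT. rewrite Rabs_Ropp in HT. unfold Rminus; lra. }
  set (M := L * Bp). assert (0 <= M) by (unfold M; nra).
  assert (HM : forall s, -a < s < a -> Rabs (ddphi s) <= M).
  { intros s Hs. destruct (Hd s Hs) as [_ [_ ->]]. rewrite Rabs_mult. unfold M.
    apply Rmult_le_compat; try apply Rabs_pos. apply HL; lra. apply HBp; lra. }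
  exists L, Bp, M, (Rabs (dphi 0) + M * a). repeat split; auto.
  pose proof (Rabs_pos (dphi 0)); nra.
  intros s Hs. destruct (MVT_abs dphi ddphi 0 s) as [c [Hc1 Hc2]]; clear Hc.
  { intros c Hc. apply Hd. unfold Rmin, Rmax in Hc; dcases; lra. }
  assert (Hca : -a < c < a) by (unfold Rmin, Rmax in Hc2; dcases; lra).
  specialize (HM c Hca). pose proof (Rabs_pos (ddphi c)).
  assert (Hsa : Rabs (s - 0) <= a) by (unfold Rabs; dcases; lra).
  pose proof (Rabs_triang (dphi s - dphi 0) (dphi 0)) as HT. replace (dphi s - dphi 0 + dphi 0) with (dphi s) in HT by ring.
  pose proof (Rabs_pos (s - 0)). nra.
Qed.

Lemma ode_lim a V lam phi dphi ddphi : ODE a V lam phi dphi ddphi ->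
  forall eps, 0 < eps -> exists del, 0 < del /\ forall s, a - del < s < a -> Rabs (phi s) < eps /\ Rabs (phi (-s)) < eps.
Proof.
  intros [Ha [HV [Hev [[Hc [H0 [H1 [_ _]]]] Hp]]]] eps Heps.
  destruct (Hc a ltac:(lra) eps Heps) as [d1 [Hd1 Ht1]].
  destruct (Hc (-a) ltac:(lra) eps Heps) as [d2 [Hd2 Ht2]].
  exists (Rmin (Rmin d1 d2) a). split. repeat apply Rmin_pos; auto.
  intros s Hs. pose proof (Rmin_l (Rmin d1 d2) a). pose proof (Rmin_r (Rmin d1 d2) a).
  pose proof (Rmin_l d1 d2). pose proof (Rmin_r d1 d2). split.
  - specialize (Ht1 s ltac:(lra)). rewrite H1 in Ht1. replace (phi s - 0) with (phi s) in Ht1 by ring.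
    apply Ht1. unfold Rabs; dcases; lra.
  - specialize (Ht2 (-s) ltac:(lra)). rewrite H0 in Ht2. replace (phi (-s) - 0) with (phi (-s)) in Ht2 by ring.
    apply Ht2. unfold Rabs; dcases; lra.
Qed.

Lemma ode_even a V lam phi dphi ddphi : ODE a V lam phi dphi ddphi -> dphi 0 = 0.
Proof.
  intros HO. pose proof (ode_d _ _ _ _ _ _ HO) as Hd.
  destruct (ode_bounds _ _ _ _ _ _ HO) as [L [Bp [M [P [HL [HBp [HM [HP [_ [_ [_ HPb]]]]]]]]]]].
  pose proof (ode_lim _ _ _ _ _ _ HO) as Hlim.
  destruct HO as [Ha [HV [Hev [[Hc [H0 [H1 [_ _]]]] Hp]]]].
  set (W := fun s => - (phi s * dphi (- s)) - dphi s * phi (- s)).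
  assert (HW : forall s, -a < s < a -> derivable_pt_lim W s 0).
  { intros s Hs. destruct (Hd s Hs) as [d1 [d2 e2]]. destruct (Hd (-s) ltac:(lra)) as [d3 [d4 e4]].
    unfold W. eapply dval. apply dminus. apply (derivable_pt_lim_opp (fun s => phi s * dphi (-s))).
    apply dmult. apply d1. apply dopp_arg; apply d4. apply dmult. apply d2. apply dopp_arg; apply d3.
    rewrite e2, e4, Hev by lra. ring. }
  assert (HWc : forall s, 0 <= s < a -> W s = W 0).
  { intros s Hs. destruct (Req_dec s 0). subst; auto.
    destruct (MVT_cor2 W (fun _ => 0) 0 s) as [c [Hc1 Hc2]]. lra.
    intros c Hc'. apply HW. lra. lra. }
  assert (W 0 = 0).
  { cut (Rabs (W 0) <= 0). unfold Rabs; dcases; lra. apply le_epsilon. intros eps Heps. rewrite Rplus_0_l.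
    destruct (Hlim (eps / (2 * (P + 1)))) as [del [Hdel Hs]]. apply Rdiv_lt_0_compat; lra.
    set (s := Rmax 0 (a - del / 2)). assert (0 <= s < a) by (unfold s, Rmax; dcases; lra).
    assert (a - del < s < a) by (unfold s, Rmax; dcases; lra).
    rewrite <- (HWc s H). destruct (Hs s H2) as [A B]. unfold W.
    pose proof (HPb s ltac:(lra)). pose proof (HPb (-s) ltac:(lra)).
    assert (Rabs (- (phi s * dphi (- s)) - dphi s * phi (- s)) <= Rabs (phi s) * P + P * Rabs (phi (-s))).
    { eapply Rle_trans. apply Rabs_triang. rewrite Rabs_Ropp, Rabs_Ropp, !Rabs_mult.
      pose proof (Rabs_pos (phi s)). pose proof (Rabs_pos (phi (-s))). nra. }
    assert (Rabs (phi s) * P + P * Rabs (phi (- s)) <= eps / (2 * (P + 1)) * (2 * (P + 1))).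
    { pose proof (Rabs_pos (phi s)). pose proof (Rabs_pos (phi (-s))). nra. }
    replace (eps / (2 * (P + 1)) * (2 * (P + 1))) with eps in H6 by (field; lra). lra. }
  unfold W in H. rewrite Ropp_0 in H. assert (0 < phi 0) by (apply Hp; lra). nra.
Qed.

Lemma div_bound x y z w : 0 < w -> w <= y -> 0 <= x -> x <= z -> x / y <= z / w.
Proof. intros. unfold Rdiv. apply Rmult_le_compat; auto. left; apply Rinv_0_lt_compat; lra.
  apply Rinv_le_contravar; auto. Qed.

Lemma ode_small a V lam phi dphi ddphi : ODE a V lam phi dphi ddphi -> forall b, 0 <= b < a ->
  exists C, forall s, 0 <= s <= b -> dphi s / phi s >= - C * s.
Proof.
  intros HO b Hb. pose proof (ode_d _ _ _ _ _ _ HO) as Hd. pose proof (ode_even _ _ _ _ _ _ HO) as He.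
  destruct (ode_bounds _ _ _ _ _ _ HO) as [L [Bp [M [P [HL [HBp [HM [HP [_ [HBpb [HMb HPb]]]]]]]]]]].
  destruct HO as [Ha [HV [Hev [[Hc [H0 [H1 [_ _]]]] Hp]]]].
  destruct (continuity_ab_min phi 0 b ltac:(lra)) as [mx [Hmx Hmx2]].
  { intros c Hc'. apply (dcont phi c (dphi c)). apply Hd; lra. }
  set (cm := phi mx). assert (Hcm : 0 < cm) by (apply Hp; lra).
  set (C := (M * Bp + P * P) / (cm * cm)). exists C. intros s Hs.
  set (psi := fun y => dphi y / phi y).
  assert (Hpsi : forall c, 0 <= c <= b -> derivable_pt_lim psi c
     ((ddphi c * phi c - dphi c * dphi c) / (phi c * phi c))).
  { intros c Hc'. unfold psi. apply ddiv. apply Hd; lra. apply Hd; lra. assert (0 < phi c) by (apply Hp; lra). lra. }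
  destruct (MVT_abs psi (fun c => (ddphi c * phi c - dphi c * dphi c) / (phi c * phi c)) 0 s) as [c [Hc1 Hc2]].
  { intros c Hc'. apply Hpsi. unfold Rmin, Rmax in Hc'; dcases; lra. }
  assert (Hc3 : 0 <= c <= b) by (unfold Rmin, Rmax in Hc2; dcases; lra).
  assert (Hpc : cm <= phi c) by (apply Hmx; auto).
  assert (Rabs ((ddphi c * phi c - dphi c * dphi c) / (phi c * phi c)) <= C).
  { unfold Rdiv at 1. rewrite Rabs_mult, Rabs_inv. rewrite (Rabs_right (phi c * phi c)) by nra. unfold C. fold (Rdiv (Rabs (ddphi c * phi c - dphi c * dphi c)) (phi c * phi c)).
    apply div_bound. nra. nra. apply Rabs_pos.
    eapply Rle_trans. apply Rabs_triang. rewrite Rabs_Ropp, !Rabs_mult.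
    specialize (HMb c ltac:(lra)). specialize (HBpb c ltac:(lra)). specialize (HPb c ltac:(lra)).
    pose proof (Rabs_pos (ddphi c)). pose proof (Rabs_pos (phi c)). pose proof (Rabs_pos (dphi c)). nra. }
  unfold psi in Hc1. rewrite He in Hc1. replace (0 / phi 0) with 0 in Hc1 by (unfold Rdiv; ring).
  replace (s - 0) with s in Hc1 by ring. rewrite (Rabs_right s) in Hc1 by lra.
  assert (HH : Rabs (dphi s / phi s - 0) <= C * s) by (rewrite Hc1; apply Rmult_le_compat_r; lra).
  unfold Rabs in HH; dcases; lra.
Qed.

Lemma ode_near a V lam phi dphi ddphi : ODE a V lam phi dphi ddphi ->
  exists eta K, 0 < eta < a /\ forall s, a - eta <= s < a -> dphi s / phi s >= - / (a - s) - K.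
Proof.
  intros HO. pose proof (ode_d _ _ _ _ _ _ HO) as Hd.
  destruct (ode_bounds _ _ _ _ _ _ HO) as [L [Bp [M [P [HL [HBp [HM [HP [HLb [HBpb [HMb HPb]]]]]]]]]]].
  pose proof (ode_lim _ _ _ _ _ _ HO) as Hlim.
  destruct HO as [Ha [HV [Hev [[Hc [H0 [H1 [_ _]]]] Hp]]]].
  set (L' := 1 + L).
  set (F := fun t => (phi t * phi t + dphi t * dphi t) * exp (L' * t)).
  set (Fd := fun t => ((dphi t * phi t + phi t * dphi t) + (ddphi t * dphi t + dphi t * ddphi t)) * exp (L' * t) + (phi t * phi t + dphi t * dphi t) * (exp (L' * t) * L')).
  assert (HF : forall t, -a < t < a -> derivable_pt_lim F t (Fd t) /\ 0 <= Fd t).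
  { intros t Ht. destruct (Hd t Ht) as [d1 [d2 e2]].
    split. unfold F. eapply dval. apply dmult.
    apply (dplus (fun y => phi y * phi y) (fun y => dphi y * dphi y)).
    apply (dmult phi phi); [exact d1|exact d1]. apply (dmult dphi dphi); [exact d2|exact d2].
    apply (dexp_comp (fun y => L' * y)). apply (dmult (fun _ => L') (fun y => y)). apply dconst. apply did.
    unfold Fd; ring. unfold Fd. rewrite e2. pose proof (exp_pos (L' * t)).
    specialize (HLb t ltac:(lra)). set (u := V t - lam) in *. set (p := phi t) in *. set (q := dphi t) in *.
    assert (-L <= u <= L) by (unfold Rabs in HLb; dcases; lra).
    assert (0 <= (p * q + p * q) + (q * (u * p) + u * p * q) + L' * (p * p + q * q)).
    { unfold L'. assert (0 <= (2 + L + u) / 2 * ((p + q) * (p + q))) by (apply Rmult_le_pos; [lra|apply Rle_0_sqr]).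
      assert (0 <= (L - u) / 2 * ((p - q) * (p - q))) by (apply Rmult_le_pos; [lra|apply Rle_0_sqr]). 
      replace ((p * q + p * q) + (q * (u * p) + u * p * q) + (1 + L) * (p * p + q * q)) with
        ((2 + L + u) / 2 * ((p + q) * (p + q)) + (L - u) / 2 * ((p - q) * (p - q))) by field. lra. }
    apply Rle_trans with (exp (L' * t) * ((p * q + p * q) + (q * (u * p) + u * p * q) + L' * (p * p + q * q))).
    apply Rmult_le_pos; lra. right; ring. }
  assert (HFm : forall t, 0 <= t < a -> F 0 <= F t).
  { intros t Ht. destruct (Req_dec t 0). subst; lra.
    destruct (MVT_cor2 F Fd 0 t ltac:(lra)) as [c [Hc1 Hc2]].
    { intros c Hc'. apply HF; lra. }
    destruct (HF c ltac:(lra)) as [_ Hl2]. nra. }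
  set (p0 := phi 0). assert (Hp0 : 0 < p0) by (apply Hp; lra).
  set (E0 := p0 * p0 / exp (L' * a)).
  assert (HE0 : 0 < E0) by (unfold E0; apply Rdiv_lt_0_compat; [nra|apply exp_pos]).
  assert (Hen : forall t, 0 <= t < a -> E0 <= phi t * phi t + dphi t * dphi t).
  { intros t Ht. specialize (HFm t Ht). unfold F in HFm. rewrite Rmult_0_r, exp_0, Rmult_1_r in HFm.
    unfold E0. assert (exp (L' * t) <= exp (L' * a)).
    { destruct (Req_dec t a). subst; lra. left; apply exp_increasing. unfold L'; nra. }
    pose proof (exp_pos (L' * t)). fold p0 in HFm.
    apply Rle_trans with (p0 * p0 / exp (L' * t)).
    apply div_bound; auto; nra.
    apply Rmult_le_reg_r with (exp (L' * t)); auto. unfold Rdiv. rewrite Rmult_assoc, Rinv_l by lra. nra. }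
  assert (HN : forall s, 0 <= s < a -> Rabs (dphi s * (a - s) + phi s) <= M * ((a - s) * (a - s))).
  { intros s Hs. apply le_epsilon. intros eps Heps.
    destruct (Hlim (eps / 2) ltac:(lra)) as [del [Hdel Hdl]].
    set (t := Rmax (a - Rmin del (eps / (2 * (P + 1))) / 2) ((s + a) / 2)).
    assert (Hm1 : 0 < Rmin del (eps / (2 * (P + 1)))) by (apply Rmin_pos; auto; apply Rdiv_lt_0_compat; lra).
    pose proof (Rmin_l del (eps / (2 * (P + 1)))). pose proof (Rmin_r del (eps / (2 * (P + 1)))).
    assert (Ht : s < t < a) by (unfold t, Rmax; dcases; lra).
    assert (Ht2 : a - del < t) by (unfold t, Rmax; dcases; lra).
    assert (Ht3 : (a - t) * (P + 1) <= eps / 2).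
    { assert (a - t <= eps / (2 * (P + 1))) by (unfold t, Rmax; dcases; lra).
      apply Rle_trans with (eps / (2 * (P + 1)) * (P + 1)). apply Rmult_le_compat_r; lra. right; field; lra. }
    destruct (MVT_abs (fun y => dphi y * (a - y) + phi y) (fun y => ddphi y * (a - y)) s t) as [c [Hc1 Hc2]].
    { intros c Hc'. assert (-a < c < a) by (unfold Rmin, Rmax in Hc'; dcases; lra).
      destruct (Hd c H3) as [d1 [d2 _]]. clear -d1 d2. eapply dval. apply (dplus (fun y => dphi y * (a - y)) phi).
      apply (dmult dphi (fun y => a - y)). exact d2.
      apply (dminus (fun _ => a) (fun y => y)). apply dconst. apply did. exact d1. ring. }
    assert (Hc3 : s <= c <= t) by (unfold Rmin, Rmax in Hc2; dcases; lra).
    specialize (HMb c ltac:(lra)). destruct (Hdl t ltac:(lra)) as [Hpt _].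
    specialize (HPb t ltac:(lra)).
    assert (Rabs (dphi t * (a - t) + phi t) <= eps / 2 + eps / 2).
    { eapply Rle_trans. apply Rabs_triang. rewrite Rabs_mult, (Rabs_right (a - t)) by lra. nra. }
    rewrite Rabs_mult, (Rabs_right (a - c)) in Hc1 by lra. rewrite (Rabs_right (t - s)) in Hc1 by lra.
    pose proof (Rabs_pos (ddphi c)).
    assert (Rabs (ddphi c) * (a - c) * (t - s) <= M * ((a - s) * (a - s))).
    { apply Rle_trans with (M * (a - s) * (a - s)); [|right; ring]. apply Rmult_le_compat; [nra|lra|apply Rmult_le_compat; lra|lra]. }
    pose proof (Rabs_triang (dphi s * (a - s) + phi s - (dphi t * (a - t) + phi t)) (dphi t * (a - t) + phi t)).
    replace (dphi s * (a - s) + phi s - (dphi t * (a - t) + phi t) + (dphi t * (a - t) + phi t)) with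
      (dphi s * (a - s) + phi s) in H6 by ring.
    rewrite <- Rabs_Ropp in Hc1. 
    replace (- (dphi t * (a - t) + phi t - (dphi s * (a - s) + phi s))) with
      (dphi s * (a - s) + phi s - (dphi t * (a - t) + phi t)) in Hc1 by ring. lra. }
  set (c1 := sqrt (E0 / 2)). assert (Hc1 : 0 < c1) by (apply sqrt_lt_R0; lra).
  assert (Hc1s : c1 * c1 = E0 / 2) by (apply sqrt_sqrt; lra).
  destruct (Hlim c1 Hc1) as [del1 [Hdel1 Hdl1]].
  set (eta := Rmin (a / 2) (Rmin (del1 / 2) (c1 / (2 * (M + 1))))).
  assert (He1 : 0 < eta) by (unfold eta; repeat apply Rmin_pos; try apply Rdiv_lt_0_compat; lra).
  assert (He2 : eta <= a / 2) by apply Rmin_l.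
  assert (He3 : eta <= del1 / 2) by (eapply Rle_trans; [apply Rmin_r|apply Rmin_l]).
  assert (He4 : M * eta <= c1 / 2).
  { assert (eta <= c1 / (2 * (M + 1))) by (eapply Rle_trans; [apply Rmin_r|apply Rmin_r]).
    apply Rle_trans with (M * (c1 / (2 * (M + 1)))). apply Rmult_le_compat_l; lra.
    apply Rle_trans with ((M + 1) * (c1 / (2 * (M + 1)))). apply Rmult_le_compat_r. left; apply Rdiv_lt_0_compat; lra. lra.
    right; field; lra. }
  exists eta, (2 * M / c1). split. lra.
  intros s Hs. set (r := a - s). assert (Hr : 0 < r <= eta) by (unfold r; lra).
  assert (Hsa : 0 <= s < a) by lra.
  specialize (Hen s Hsa). specialize (HN s Hsa). destruct (Hdl1 s ltac:(lra)) as [Hps _].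
  assert (Hps2 : phi s * phi s < E0 / 2).
  { rewrite <- Hc1s. pose proof (Rabs_pos (phi s)).
    replace (phi s * phi s) with (Rabs (phi s) * Rabs (phi s)) by (rewrite <- Rabs_mult; apply Rabs_right; nra). nra. }
  assert (Hds : c1 * c1 < dphi s * dphi s) by lra.
  fold r in HN. assert (HMr : M * r <= c1 / 2) by nra.
  assert (Hpos : 0 < phi s) by (apply Hp; lra).
  assert (Hdneg : dphi s < - c1).
  { assert (dphi s * r < M * (r * r)) by (unfold Rabs in HN; dcases; nra).
    assert (dphi s < M * r) by nra.
    destruct (Rlt_le_dec (dphi s) (- c1)); auto. nra. }
  assert (Hphi : c1 * r / 2 <= phi s) by (unfold Rabs in HN; dcases; nra).
  assert (HK : dphi s * r + phi s >= - (2 * M / c1) * phi s * r).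
  { assert (2 * M / c1 * phi s * r >= M * (r * r)).
    { apply Rle_ge. replace (M * (r * r)) with (2 * M / c1 * (c1 * r / 2) * r) by (field; lra).
      apply Rmult_le_compat_r. lra. apply Rmult_le_compat_l; auto. apply Rmult_le_pos. lra. left; apply Rinv_0_lt_compat; lra. }
    unfold Rabs in HN; dcases; nra. }
  set (q := dphi s / phi s). assert (Hq : dphi s = q * phi s) by (unfold q; field; lra).
  rewrite Hq in HK. fold q.
  assert (q * r + 1 + 2 * M / c1 * r >= 0).
  { apply Rle_ge. apply Rmult_le_reg_r with (phi s); auto. nra. }
  apply Rle_ge. apply Rmult_le_reg_r with r. lra.
  replace ((- / r - 2 * M / c1) * r) with (- 1 - 2 * M / c1 * r) by (field; lra). lra.
Qed.

Ltac vext := apply functional_extensionality; intro; unfold vadd, vsub, vscale; first [ring | field; lra | field].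

Lemma bdry_notin n Om z : is_open n Om -> boundary n Om z -> ~ Om z.
Proof. intros Ho [Hz Hb] Hin. destruct (Ho z Hin) as [_ [r [Hr Hball]]].
  destruct (Hb r Hr) as [_ [y [Hy1 [Hy2 Hy3]]]]. apply Hy2, Hball. split; auto. Qed.

Lemma rho_ge n Om rho x r : is_open n Om -> dist_to_boundary n Om rho -> Om x -> 0 < r ->
  (forall y, ball n x r y -> Om y) -> r <= rho x.
Proof. intros Ho Hr Hx Hpos Hb. destruct (Hr x Hx) as [_ H2]. apply H2.
  intros t [z [Hz ->]]. destruct (Rlt_le_dec (vdist n x z) r); auto.
  exfalso. apply (bdry_notin n Om z Ho Hz). apply Hb. split. apply Hz. rewrite vdist_sym; auto. Qed.

Lemma rho_pos n Om rho x : is_open n Om -> dist_to_boundary n Om rho -> Om x -> 0 < rho x.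
Proof. intros Ho Hr Hx. destruct (Ho x Hx) as [_ [r [Hpos Hb]]].
  pose proof (rho_ge n Om rho x r Ho Hr Hx Hpos Hb). lra. Qed.

Lemma rho_le n Om rho x z : dist_to_boundary n Om rho -> Om x -> boundary n Om z -> rho x <= vdist n x z.
Proof. intros Hr Hx Hz. destruct (Hr x Hx) as [H1 _]. apply H1. exists z; auto. Qed.

Definition gam (x v : vec) (t : R) : vec := vadd x (vscale t v).

Lemma gam_dist n x v s t : vdist n (gam x v s) (gam x v t) = Rabs (s - t) * vnorm n v.
Proof. unfold vdist. replace (vsub (gam x v s) (gam x v t)) with (vscale (s - t) v).
  apply vnorm_scale. unfold gam; vext. Qed.

Lemma gam0 x v : gam x v 0 = x.
Proof. unfold gam; vext. Qed.

Lemma inRn_gam n x v t : inRn n x -> inRn n v -> inRn n (gam x v t).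
Proof. intros; unfold gam; apply inRn_add; auto; apply inRn_scale; auto. Qed.

Lemma ball_in n Om rho x z : is_open n Om -> dist_to_boundary n Om rho -> Om x -> inRn n z ->
  vdist n z x < rho x -> Om z.
Proof.
  intros Ho Hr Hx Hz Hd. destruct (Classical_Prop.classic (Om z)) as [|Hnz]; auto. exfalso.
  assert (HxR : inRn n x) by (apply (Ho x Hx)).
  set (v := vsub z x). set (nv := vnorm n v). assert (Hnv : 0 <= nv) by apply vnorm_nonneg.
  assert (HvR : inRn n v) by (apply inRn_sub; auto).
  assert (Hg1 : gam x v 1 = z) by (unfold gam, v; vext).
  set (S := fun t => 0 <= t <= 1 /\ Om (gam x v t)).
  destruct (completeness S) as [ts [Hub Hlub]].
  { exists 1. intros t [Ht _]. lra. }
  { exists 0. split. lra. rewrite gam0; auto. }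
  assert (Hts0 : 0 <= ts) by (apply Hub; split; [lra|rewrite gam0; auto]).
  assert (Hts1 : ts <= 1) by (apply Hlub; intros t [Ht _]; lra).
  set (b := gam x v ts).
  assert (Hbd : boundary n Om b).
  { split. apply inRn_gam; auto. intros r Hrpos. split.
    - destruct (Classical_Prop.classic (exists t, S t /\ ts - r / (nv + 1) < t)) as [[t [Ht1 Ht2]]|Hno].
      + exists (gam x v t). split. apply Ht1. unfold b. rewrite gam_dist; fold nv.
        assert (t <= ts) by (apply Hub; auto).
        rewrite Rabs_left1 by lra.
        assert ((ts - t) * (nv + 1) < r).
        { apply Rlt_le_trans with (r / (nv + 1) * (nv + 1)). apply Rmult_lt_compat_r; lra. right; field; lra. }
        assert (0 <= ts - t) by lra. assert (0 <= (ts - t) * nv) by (apply Rmult_le_pos; lra).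
        replace (- (t - ts) * nv) with ((ts - t) * nv) by ring. nra.
      + exfalso. assert (ts <= ts - r / (nv + 1)).
        { apply Hlub. intros t Ht. destruct (Rle_dec t (ts - r / (nv + 1))); auto. exfalso; apply Hno; exists t; split; auto; lra. }
        assert (0 < r / (nv + 1)) by (apply Rdiv_lt_0_compat; lra). lra.
    - destruct (Classical_Prop.classic (Om b)) as [Hb|Hb].
      + exfalso. destruct (Ho b Hb) as [_ [r' [Hr' Hball]]].
        assert (Hts : ts < 1). { destruct (Req_dec ts 1); [|lra]. exfalso. apply Hnz. rewrite <- Hg1. unfold b in Hb. rewrite <- H. auto. }
        set (t' := Rmin 1 (ts + r' / (2 * (nv + 1)))).
        assert (0 < r' / (2 * (nv + 1))) by (apply Rdiv_lt_0_compat; lra).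
        assert (Ht' : ts < t' <= 1) by (unfold t', Rmin; dcases; lra).
        assert (S t').
        { split. lra. apply Hball. split. apply inRn_gam; auto. unfold b. rewrite gam_dist; fold nv.
          rewrite Rabs_right by lra.
          assert (t' - ts <= r' / (2 * (nv + 1))) by (unfold t', Rmin; dcases; lra).
          assert ((t' - ts) * (nv + 1) <= r' / 2).
          { apply Rle_trans with (r' / (2 * (nv + 1)) * (nv + 1)). apply Rmult_le_compat_r; lra. right; field; lra. }
          nra. }
        pose proof (Hub t' H0). lra.
      + exists b. split. apply inRn_gam; auto. split; auto. unfold vdist. replace (vsub b b) with (vscale 0 b) by vext.
        rewrite vnorm_scale, Rabs_R0. lra. }
  pose proof (rho_le n Om rho x b Hr Hx Hbd).
  assert (vdist n x b = ts * nv).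
  { unfold b. rewrite <- (gam0 x v) at 1. rewrite gam_dist; fold nv. rewrite Rabs_left1 by lra. ring. }
  assert (vdist n z x = nv) by reflexivity.
  nra.
Qed.

Lemma seg_in (Om : vec -> Prop) x y t : convex_set Om -> Om x -> Om y -> 0 <= t <= 1 -> Om (gam x (vsub y x) t).
Proof. intros Hc Hx Hy Ht. replace (gam x (vsub y x) t) with (vadd (vscale (1 - t) x) (vscale t y)).
  apply Hc; auto. unfold gam; vext. Qed.

Lemma rho_concave n Om rho x y t : is_open n Om -> convex_set Om -> dist_to_boundary n Om rho ->
  Om x -> Om y -> 0 <= t <= 1 ->
  (1 - t) * rho x + t * rho y <= rho (vadd (vscale (1 - t) x) (vscale t y)).
Proof.
  intros Ho Hc Hr Hx Hy Ht. pose proof (rho_pos n Om rho x Ho Hr Hx). pose proof (rho_pos n Om rho y Ho Hr Hy).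
  set (R0 := (1 - t) * rho x + t * rho y). assert (HR : 0 < R0) by (unfold R0; nra).
  set (w := vadd (vscale (1 - t) x) (vscale t y)).
  assert (Hw : Om w) by (apply Hc; auto).
  apply (rho_ge n Om rho w R0 Ho Hr Hw HR).
  intros z [Hz Hzd]. set (h := vsub z w).
  assert (HxR : inRn n x) by apply (Ho x Hx). assert (HyR : inRn n y) by apply (Ho y Hy).
  assert (HwR : inRn n w) by (unfold w; apply inRn_add; apply inRn_scale; auto).
  assert (HhR : inRn n h) by (apply inRn_sub; auto).
  set (x' := vadd x (vscale (rho x / R0) h)). set (y' := vadd y (vscale (rho y / R0) h)).
  assert (Hx' : Om x').
  { apply (ball_in n Om rho x x' Ho Hr Hx). apply inRn_add; auto; apply inRn_scale; auto.
    unfold vdist. replace (vsub x' x) with (vscale (rho x / R0) h) by (unfold x'; vext).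
    rewrite vnorm_scale. rewrite Rabs_right by (apply Rle_ge, Rlt_le, Rdiv_lt_0_compat; lra).
    assert (vnorm n h < R0) by apply Hzd.
    apply Rlt_le_trans with (rho x / R0 * R0). apply Rmult_lt_compat_l; auto. apply Rdiv_lt_0_compat; lra.
    right; field; lra. }
  assert (Hy' : Om y').
  { apply (ball_in n Om rho y y' Ho Hr Hy). apply inRn_add; auto; apply inRn_scale; auto.
    unfold vdist. replace (vsub y' y) with (vscale (rho y / R0) h) by (unfold y'; vext).
    rewrite vnorm_scale. rewrite Rabs_right by (apply Rle_ge, Rlt_le, Rdiv_lt_0_compat; lra).
    assert (vnorm n h < R0) by apply Hzd.
    apply Rlt_le_trans with (rho y / R0 * R0). apply Rmult_lt_compat_l; auto. apply Rdiv_lt_0_compat; lra.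
    right; field; lra. }
  replace z with (vadd (vscale (1 - t) x') (vscale t y')). apply Hc; auto.
  apply functional_extensionality; intro i. unfold x', y', h, w, vadd, vscale, vsub.
  unfold R0 in *. field. lra.
Qed.

Lemma ln_Rpower r k : ln (Rpower r k) = k * ln r.
Proof. unfold Rpower. apply ln_exp. Qed.

Lemma vdist_gam_x n x e t : vnorm n e = 1 -> vdist n (gam x e t) x = Rabs t.
Proof. intros. rewrite <- (gam0 x e) at 2. rewrite gam_dist, H. rewrite Rminus_0_r; ring. Qed.

Lemma diam_le n Om d a b : diameter n Om d -> Om a -> Om b -> vdist n a b <= d.
Proof. intros [H _] Ha Hb. apply H. exists a, b; auto. Qed.

Lemma sum_rho n Om rho d x e X : is_open n Om -> dist_to_boundary n Om rho -> diameter n Om d ->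
  Om x -> Om (gam x e X) -> inRn n e -> vnorm n e = 1 -> 0 <= X ->
  X + rho x + rho (gam x e X) <= d.
Proof.
  intros Ho Hr Hd Hx Hy He He1 HX. set (y := gam x e X) in *.
  pose proof (rho_pos n Om rho x Ho Hr Hx). pose proof (rho_pos n Om rho y Ho Hr Hy).
  assert (HxR : inRn n x) by apply (Ho x Hx).
  assert (Hgen : forall s s', 0 <= s < rho x -> 0 <= s' < rho y -> X + s + s' <= d).
  { intros s s' Hs Hs'.
    assert (O1 : Om (gam x e (- s))).
    { apply (ball_in n Om rho x); auto. apply inRn_gam; auto. rewrite vdist_gam_x; auto. rewrite Rabs_Ropp, Rabs_right; lra. }
    assert (O2 : Om (gam x e (X + s'))).
    { apply (ball_in n Om rho y); auto. apply inRn_gam; auto. unfold y. rewrite gam_dist, He1.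
      fold y. replace (X + s' - X) with s' by ring. rewrite Rabs_right; lra. }
    pose proof (diam_le n Om d _ _ Hd O2 O1). rewrite gam_dist, He1 in H1.
    rewrite Rabs_right in H1 by lra. lra. }
  destruct (Rle_dec (X + rho x + rho y) d); auto. exfalso.
  set (m := Rmin (Rmin (rho x) (rho y)) (X + rho x + rho y - d) / 4).
  assert (0 < m) by (unfold m; apply Rdiv_lt_0_compat; [repeat apply Rmin_pos|]; lra).
  assert (m <= rho x / 2) by (unfold m, Rmin; dcases; lra).
  assert (m <= rho y / 2) by (unfold m, Rmin; dcases; lra).
  assert (4 * m <= X + rho x + rho y - d) by (unfold m, Rmin; dcases; lra).
  specialize (Hgen (rho x - m) (rho y - m) ltac:(lra) ltac:(lra)). lra.
Qed.

Lemma gam_lin x e s tau : gam x e (tau * s) = vadd (vscale (1 - tau) x) (vscale tau (gam x e s)).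
Proof. unfold gam; vext. Qed.

Lemma tangent n Om rho kappa x e g s : is_open n Om -> convex_set Om -> dist_to_boundary n Om rho ->
  0 < kappa -> Om x -> inRn n e -> vnorm n e = 1 ->
  has_gradient n (fun z => ln (Rpower (rho z) kappa)) x g -> Om (gam x e s) ->
  rho (gam x e s) <= rho x + s * (rho x * (dot n g e / kappa)).
Proof.
  intros Ho Hc Hr Hk Hx He He1 Hg Hs.
  assert (HxR : inRn n x) by apply (Ho x Hx).
  pose proof (rho_pos n Om rho x Ho Hr Hx) as Hrx.
  set (D := dot n g e / kappa).
  set (h := fun t => ln (rho (gam x e t))).
  assert (Hh : derivable_pt_lim h 0 D).
  { intros eps Heps. destruct (Hg (eps * kappa / 2)) as [del [Hdel Hb]]. apply Rdiv_lt_0_compat; nra.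
    exists (mkposreal del Hdel). intros t Ht Ht2. simpl in Ht2. rewrite Rplus_0_l.
    specialize (Hb (gam x e t)). simpl in Hb. rewrite !ln_Rpower in Hb.
    replace (vsub (gam x e t) x) with (vscale t e) in Hb by (unfold gam; vext).
    rewrite dot_scale_r, vdist_gam_x in Hb by auto.
    assert (Hb2 : Rabs (kappa * ln (rho (gam x e t)) - kappa * ln (rho x) - t * dot n g e) <= eps * kappa / 2 * Rabs t).
    { apply Hb. split. apply inRn_gam; auto. rewrite vdist_gam_x; auto. }
    unfold h. rewrite gam0.
    replace ((ln (rho (gam x e t)) - ln (rho x)) / t - D) with
      ((kappa * ln (rho (gam x e t)) - kappa * ln (rho x) - t * dot n g e) / (kappa * t)) by (unfold D; field; lra).
    unfold Rdiv at 1. rewrite Rabs_mult, Rabs_inv, Rabs_mult, (Rabs_right kappa) by lra.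
    assert (0 < Rabs t) by (apply Rabs_pos_lt; auto).
    apply Rle_lt_trans with (eps * kappa / 2 * Rabs t * / (kappa * Rabs t)).
    apply Rmult_le_compat_r; auto. left; apply Rinv_0_lt_compat; nra.
    replace (eps * kappa / 2 * Rabs t * / (kappa * Rabs t)) with (eps / 2) by (field; lra). lra. }
  assert (Hf2 : derivable_pt_lim (fun t => exp (h t)) 0 (rho x * D)).
  { eapply dval. apply dexp_comp. apply Hh. unfold h. rewrite gam0, exp_ln; auto. }
  assert (Hconc : forall tau, 0 < tau <= 1 -> tau * (rho (gam x e s) - rho x) <= exp (h (tau * s)) - exp (h 0)).
  { intros tau Htau. unfold h. rewrite gam0, gam_lin.
    assert (Om (vadd (vscale (1 - tau) x) (vscale tau (gam x e s)))) by (apply Hc; auto; lra).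
    pose proof (rho_pos n Om rho _ Ho Hr H).
    rewrite !exp_ln by auto.
    pose proof (rho_concave n Om rho x (gam x e s) tau Ho Hc Hr Hx Hs ltac:(lra)). lra. }
  destruct (Req_dec s 0) as [Hs0|Hs0].
  { subst. rewrite gam0. lra. }
  apply le_epsilon. intros eps Heps.
  destruct (Hf2 (eps / (Rabs s + 1))) as [del Hdel]. apply Rdiv_lt_0_compat; [lra|pose proof (Rabs_pos s); lra].
  assert (Has : 0 < Rabs s) by (apply Rabs_pos_lt; auto).
  assert (HE : eps / (Rabs s + 1) * Rabs s <= eps).
  { apply Rle_trans with (eps / (Rabs s + 1) * (Rabs s + 1)). apply Rmult_le_compat_l. left; apply Rdiv_lt_0_compat; lra. lra.
    right; field; lra. }
  assert (HE0 : 0 < eps / (Rabs s + 1)) by (apply Rdiv_lt_0_compat; lra).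
  set (E := eps / (Rabs s + 1)) in *.
  set (tau := Rmin 1 (del / (2 * Rabs s))).
  assert (Htau : 0 < tau <= 1).
  { unfold tau. split. apply Rmin_pos. lra. apply Rdiv_lt_0_compat. apply cond_pos. lra. apply Rmin_l. }
  assert (Hts : Rabs (tau * s) < del).
  { rewrite Rabs_mult, Rabs_right by lra. assert (tau <= del / (2 * Rabs s)) by apply Rmin_r.
    apply Rle_lt_trans with (del / (2 * Rabs s) * Rabs s). apply Rmult_le_compat_r; lra.
    replace (del / (2 * Rabs s) * Rabs s) with (del / 2) by (field; lra). pose proof (cond_pos del). lra. }
  specialize (Hdel (tau * s) ltac:(apply Rmult_integral_contrapositive; split; lra) Hts).
  rewrite Rplus_0_l in Hdel. specialize (Hconc tau Htau).
  set (Q := (exp (h (tau * s)) - exp (h 0)) / (tau * s)) in Hdel.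
  assert (HQ : exp (h (tau * s)) - exp (h 0) = Q * (tau * s)) by (unfold Q; field; lra).
  assert (Q * s <= rho x * D * s + E * Rabs s).
  { destruct (Rle_lt_dec 0 s).
    - assert (Q <= rho x * D + E) by (unfold Rabs in Hdel; dcases; lra).
      rewrite Rabs_right by lra. nra.
    - assert (rho x * D - E <= Q) by (unfold Rabs in Hdel; dcases; lra).
      rewrite Rabs_left by lra. nra. }
  rewrite HQ in Hconc. assert (rho (gam x e s) - rho x <= Q * s).
  { apply Rmult_le_reg_l with tau. lra. lra. }
  fold D. lra.
Qed.

Lemma small_inv eps : 0 < eps -> exists N, forall k, (N <= k)%nat -> / (INR k + 1) < eps.
Proof. intros. destruct (archimed_cor1 eps H) as [N [HN HN0]]. exists N. intros k Hk.
  apply Rle_lt_trans with (/ INR N); auto. apply Rinv_le_contravar. apply lt_0_INR; auto.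
  apply le_INR in Hk. lra. Qed.

Lemma inv_pos k : 0 < / (INR k + 1).
Proof. apply Rinv_0_lt_compat. pose proof (pos_INR k). lra. Qed.

Lemma mono_lt (phi : nat -> nat) : (forall k, (phi k < phi (S k))%nat) -> forall a b, (a < b)%nat -> (phi a < phi b)%nat.
Proof. intros H a b Hab. induction b. lia. destruct (Nat.eq_dec a b). subst; auto.
  specialize (IHb ltac:(lia)). specialize (H b). lia. Qed.

Lemma mono_ge (phi : nat -> nat) : (forall k, (phi k < phi (S k))%nat) -> forall k, (k <= phi k)%nat.
Proof. intros H k. induction k. lia. specialize (H k). lia. Qed.

Lemma cv_sub (u : nat -> R) l (psi : nat -> nat) : Un_cv u l -> (forall k, (k <= psi k)%nat) -> Un_cv (fun k => u (psi k)) l.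
Proof. intros H Hp eps Heps. destruct (H eps Heps) as [N HN]. exists N. intros k Hk. apply HN. specialize (Hp k). lia. Qed.

Lemma cv_const c : Un_cv (fun _ => c) c.
Proof. intros eps Heps. exists 0%nat. intros. unfold Rdist. replace (c - c) with 0 by ring. rewrite Rabs_R0; lra. Qed.

Lemma bw1 (u : nat -> R) B : (forall k, Rabs (u k) <= B) ->
  exists psi l, (forall k, (psi k < psi (S k))%nat) /\ Un_cv (fun k => u (psi k)) l.
Proof.
  intros HB. destruct (Bolzano_Weierstrass u (fun c => -B <= c <= B) (compact_P3 (-B) B)) as [l Hl].
  { intros k. specialize (HB k). unfold Rabs in HB; dcases; lra. }
  assert (Hs : forall N k, exists p, (N <= p)%nat /\ Rabs (u p - l) < / (INR k + 1)).
  { intros N k. destruct (Hl (disc l (mkposreal _ (inv_pos k))) N) as [p [Hp1 Hp2]].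
    exists (mkposreal _ (inv_pos k)). intros y Hy; auto.
    exists p; split; auto. }
  set (sel := fun N k => proj1_sig (constructive_indefinite_description _ (Hs N k))).
  assert (Hsel : forall N k, (N <= sel N k)%nat /\ Rabs (u (sel N k) - l) < / (INR k + 1)).
  { intros. unfold sel. destruct constructive_indefinite_description; simpl; auto. }
  set (psi := nat_rect (fun _ => nat) (sel 0%nat 0%nat) (fun k pk => sel (S pk) (S k))).
  assert (Hps : forall k, psi (S k) = sel (S (psi k)) (S k)) by reflexivity.
  assert (Hps0 : psi 0%nat = sel 0%nat 0%nat) by reflexivity.
  exists psi, l. split.
  - intros k. rewrite Hps. destruct (Hsel (S (psi k)) (S k)); lia.
  - intros eps Heps. destruct (small_inv eps Heps) as [N HN]. exists N. intros k Hk.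
    unfold Rdist. apply Rlt_trans with (/ (INR k + 1)); auto.
    destruct k. rewrite Hps0. apply Hsel. rewrite Hps. apply Hsel.
Qed.

Lemma bwN N (u : nat -> vec) B : (forall k i, (i < N)%nat -> Rabs (u k i) <= B) ->
  exists phi L, (forall k, (phi k < phi (S k))%nat) /\ forall i, (i < N)%nat -> Un_cv (fun k => u (phi k) i) (L i).
Proof.
  induction N; intros HB.
  - exists (fun k => k), (fun _ => 0). split. intros; lia. intros; lia.
  - destruct IHN as [phi [L [Hphi HL]]]. intros; apply HB; lia.
    destruct (bw1 (fun k => u (phi k) N) B) as [psi [l [Hpsi Hl]]]. intros; apply HB; lia.
    exists (fun k => phi (psi k)), (fun i => if Nat.eqb i N then l else L i). split.
    + intros k. apply mono_lt; auto.
    + intros i Hi. destruct (Nat.eqb_spec i N). subst; auto.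
      apply (cv_sub (fun k => u (phi k) i)). apply HL; lia. apply mono_ge; auto.
Qed.

Lemma cv_unif n (a : nat -> vec) (P : vec) : (forall i, (i < n)%nat -> Un_cv (fun k => a k i) (P i)) ->
  forall eps, 0 < eps -> exists K, forall k, (K <= k)%nat -> forall i, (i < n)%nat -> Rabs (a k i - P i) < eps.
Proof.
  intros Hc eps Heps. induction n.
  - exists 0%nat. intros; lia.
  - destruct IHn as [K1 HK1]. intros; apply Hc; lia.
    destruct (Hc n ltac:(lia) eps Heps) as [K2 HK2]. exists (Nat.max K1 K2). intros k Hk i Hi.
    destruct (Nat.eq_dec i n). subst. apply HK2; lia. apply HK1; lia.
Qed.

Lemma cv_vdist n (a : nat -> vec) (P : vec) : (forall i, (i < n)%nat -> Un_cv (fun k => a k i) (P i)) ->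
  forall eps, 0 < eps -> exists K, forall k, (K <= k)%nat -> vdist n (a k) P < eps.
Proof.
  intros Hc eps Heps. pose proof (pos_INR n).
  destruct (cv_unif n a P Hc (eps / (INR n + 1))) as [K HK]. apply Rdiv_lt_0_compat; lra.
  exists K. intros k Hk. unfold vdist. eapply Rle_lt_trans. apply norm_small with (eps := eps / (INR n + 1)).
  left; apply Rdiv_lt_0_compat; lra. intros i Hi. left. apply HK; auto.
  apply Rlt_le_trans with ((INR n + 1) * (eps / (INR n + 1))). apply Rmult_lt_compat_r. apply Rdiv_lt_0_compat; lra. lra.
  right; field; lra.
Qed.

Definition Pj (j : nat) (w : vec) : vec := fun i => if Nat.ltb i j then w i else 0.

Lemma vnorm_Pj n j w : vnorm n (Pj j w) <= vnorm n w.
Proof. unfold vnorm. apply sqrt_le_1_alt. unfold dot, Pj. apply sumR_le. intros i Hi.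
  destruct (Nat.ltb i j); nra. Qed.

Lemma inRn_unit n j : (j < n)%nat -> inRn n (unit_vec j).
Proof. intros Hj i Hi. unfold unit_vec. destruct (Nat.eqb_spec i j); lia || reflexivity. Qed.

Lemma vnorm_unit n j : (j < n)%nat -> vnorm n (unit_vec j) = 1.
Proof. intros Hj. unfold vnorm. replace (dot n (unit_vec j) (unit_vec j)) with 1. apply sqrt_1.
  unfold dot, unit_vec. induction n. lia. simpl. destruct (Nat.eqb_spec n j).
  - subst. rewrite (sumR_ext j _ (fun _ => 0)). rewrite sumR_zero; ring.
    intros i Hi. destruct (Nat.eqb_spec i j); [lia|ring].
  - rewrite <- IHn by lia. ring. Qed.

Lemma inRn_Pj n j w : inRn n w -> inRn n (Pj j w).
Proof. intros H i Hi. unfold Pj. destruct (Nat.ltb i j); auto. Qed.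

Lemma Pj_full n w : inRn n w -> Pj n w = w.
Proof. intros H. apply functional_extensionality; intro i. unfold Pj. destruct (Nat.ltb_spec i n); auto. rewrite H; auto; lia. Qed.

Lemma dirderiv n p r D al z w : smooth_family n (ball n p r) D -> ball n p r z -> inRn n w ->
  derivable_pt_lim (fun t => D al (vadd z (vscale t w))) 0 (sumR n (fun i => D (i :: al) z * w i)).
Proof.
  intros Hs Hz Hw. destruct Hz as [HzR Hzd].
  set (rho0 := r - vdist n z p). assert (Hr0 : 0 < rho0) by (unfold rho0; lra).
  set (C := vnorm n w + 1). assert (HC : 1 <= C) by (unfold C; pose proof (vnorm_nonneg n w); lra).
  assert (Claim : forall j, (j <= n)%nat -> forall eps, 0 < eps -> exists del, 0 < del /\ forall t, Rabs t < del ->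
    Rabs (D al (vadd z (vscale t (Pj j w))) - D al z - t * sumR j (fun i => D (i :: al) z * w i)) <= eps * Rabs t).
  { induction j; intros Hj eps Heps.
    - exists 1. split. lra. intros t Ht. replace (vadd z (vscale t (Pj 0 w))) with z.
      simpl. replace (D al z - D al z - t * 0) with 0 by ring. rewrite Rabs_R0. pose proof (Rabs_pos t); nra.
      apply functional_extensionality; intro i. unfold vadd, vscale, Pj. simpl. ring.
    - destruct (IHj ltac:(lia) (eps / 2) ltac:(lra)) as [d1 [Hd1 H1]].
      set (aw := Rabs (w j) + 1). assert (Haw : 1 <= aw) by (unfold aw; pose proof (Rabs_pos (w j)); lra).
      destruct (proj1 (Hs (j :: al) z (conj HzR Hzd)) (eps / (2 * aw))) as [dc [Hdc Hc]].
      apply Rdiv_lt_0_compat; lra.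
      set (del := Rmin d1 (Rmin dc rho0 / (2 * C))).
      assert (Hm : 0 < Rmin dc rho0) by (apply Rmin_pos; auto).
      assert (Hdel : 0 < del) by (unfold del; apply Rmin_pos; auto; apply Rdiv_lt_0_compat; lra).
      exists del. split; auto. intros t Ht.
      assert (Ht1 : Rabs t < d1) by (eapply Rlt_le_trans; [apply Ht|apply Rmin_l]).
      assert (Ht2 : Rabs t * (2 * C) < Rmin dc rho0).
      { assert (Rabs t < Rmin dc rho0 / (2 * C)) by (eapply Rlt_le_trans; [apply Ht|apply Rmin_r]).
        apply Rlt_le_trans with (Rmin dc rho0 / (2 * C) * (2 * C)). apply Rmult_lt_compat_r; lra. right; field; lra. }
      specialize (H1 t Ht1).
      set (z' := vadd z (vscale t (Pj j w))). set (b := t * w j).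
      assert (Hw1 : Rabs (w j) <= vnorm n w) by (apply coord_le_norm; lia).
      assert (Hpt : forall c, Rabs c <= Rabs b -> vdist n (vadd z' (vscale c (unit_vec j))) z < Rmin dc rho0).
      { intros c Hcb. unfold vdist. replace (vsub (vadd z' (vscale c (unit_vec j))) z) with
          (vadd (vscale t (Pj j w)) (vscale c (unit_vec j))) by (unfold z'; vext).
        eapply Rle_lt_trans. apply vnorm_triang. rewrite !vnorm_scale, vnorm_unit by lia.
        pose proof (vnorm_Pj n j w). unfold b in Hcb. rewrite Rabs_mult in Hcb.
        pose proof (Rabs_pos t). pose proof (vnorm_nonneg n (Pj j w)).
        apply Rle_lt_trans with (Rabs t * (2 * C)); auto. unfold C. nra. }
      assert (Hin : forall c, Rabs c <= Rabs b -> ball n p r (vadd z' (vscale c (unit_vec j)))).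
      { intros c Hcb. specialize (Hpt c Hcb). split. apply inRn_add. apply inRn_add; auto. apply inRn_scale, inRn_Pj; auto.
        apply inRn_scale, inRn_unit; lia.
        pose proof (vdist_triang n (vadd z' (vscale c (unit_vec j))) z p). pose proof (Rmin_r dc rho0). unfold rho0 in *. lra. }
      destruct (MVT_abs (fun c => D al (vadd z' (vscale c (unit_vec j))) - c * D (j :: al) z)
         (fun c => D (j :: al) (vadd z' (vscale c (unit_vec j))) - D (j :: al) z) 0 b) as [c [Hc1 Hc2]].
      { intros c Hc'. assert (Hcb : Rabs c <= Rabs b) by (unfold Rmin, Rmax, Rabs in *; dcases; lra).
        apply dminus.
        - apply dshift. eapply derivable_pt_lim_ext.
          2: { destruct (Hs al _ (Hin c Hcb)) as [_ Hp]. apply (Hp j). lia. }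
          intros s. simpl. f_equal. vext.
        - eapply dval. apply (dmult (fun c => c) (fun _ => D (j :: al) z)). apply did. apply dconst. ring. }
      assert (Hcb : Rabs c <= Rabs b) by (unfold Rmin, Rmax, Rabs in *; dcases; lra).
      assert (Hcc : Rabs (D (j :: al) (vadd z' (vscale c (unit_vec j))) - D (j :: al) z) < eps / (2 * aw)).
      { apply Hc. split. apply (Hin c Hcb). pose proof (Hpt c Hcb). pose proof (Rmin_l dc rho0). lra. }
      assert (Heq : vadd z (vscale t (Pj (S j) w)) = vadd z' (vscale b (unit_vec j))).
      { apply functional_extensionality; intro i. unfold z', b, vadd, vscale, Pj, unit_vec.
        destruct (Nat.ltb_spec i (S j)), (Nat.ltb_spec i j), (Nat.eqb_spec i j); subst; try lia; ring. }
      rewrite Heq. 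
      replace (vadd z' (vscale 0 (unit_vec j))) with z' in Hc1 by vext.
      change (sumR (S j) (fun i => D (i :: al) z * w i)) with (sumR j (fun i => D (i :: al) z * w i) + D (j :: al) z * w j).
      set (A := D al (vadd z' (vscale b (unit_vec j))) - b * D (j :: al) z - (D al z' - 0 * D (j :: al) z)) in Hc1.
      assert (HA : Rabs A <= eps / 2 * Rabs t).
      { rewrite Hc1. replace (b - 0) with b by ring. unfold b. rewrite Rabs_mult.
        pose proof (Rabs_pos (D (j :: al) (vadd z' (vscale c (unit_vec j))) - D (j :: al) z)).
        pose proof (Rabs_pos t). pose proof (Rabs_pos (w j)).
        assert (Rabs (w j) <= aw) by (unfold aw; lra).
        apply Rle_trans with (eps / (2 * aw) * (Rabs t * aw)). apply Rmult_le_compat; nra.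
        right; field; lra. }
      replace (D al (vadd z' (vscale b (unit_vec j))) - D al z - t * (sumR j (fun i => D (i :: al) z * w i) + D (j :: al) z * w j))
        with (A + (D al z' - D al z - t * sumR j (fun i => D (i :: al) z * w i))) by (unfold A, b; ring).
      fold z' in H1. eapply Rle_trans. apply Rabs_triang. lra. }
  intros eps Heps. destruct (Claim n (le_n n) (eps / 2) ltac:(lra)) as [del [Hdel Hcl]].
  exists (mkposreal del Hdel). intros h Hh Hh2. simpl in Hh2. specialize (Hcl h Hh2).
  rewrite Pj_full in Hcl by auto. rewrite Rplus_0_l.
  replace (vadd z (vscale 0 w)) with z by vext.
  assert (0 < Rabs h) by (apply Rabs_pos_lt; auto).
  replace ((D al (vadd z (vscale h w)) - D al z) / h - sumR n (fun i => D (i :: al) z * w i)) with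
    ((D al (vadd z (vscale h w)) - D al z - h * sumR n (fun i => D (i :: al) z * w i)) / h) by (field; auto).
  unfold Rdiv. rewrite Rabs_mult, Rabs_inv.
  apply Rle_lt_trans with (eps / 2 * Rabs h * / Rabs h). apply Rmult_le_compat_r; auto. left; apply Rinv_0_lt_compat; auto.
  replace (eps / 2 * Rabs h * / Rabs h) with (eps / 2) by (field; lra). lra.
Qed.

Lemma dsum n (f : nat -> R -> R) l x : (forall i, (i < n)%nat -> derivable_pt_lim (f i) x (l i)) ->
  derivable_pt_lim (fun t => sumR n (fun i => f i t)) x (sumR n l).
Proof. induction n; intros H. simpl. apply dconst. simpl. apply (dplus (fun t => sumR n (fun i => f i t)) (f n)).
  apply IHn; intros; apply H; lia. apply H; lia. Qed.

Definition clos n (Om : vec -> Prop) z := forall eps, 0 < eps -> exists y, Om y /\ vdist n y z < eps.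

Lemma ball_self n p r : inRn n p -> 0 < r -> ball n p r p.
Proof. intros. split; auto. unfold vdist. replace (vsub p p) with (vscale 0 p) by vext. rewrite vnorm_scale, Rabs_R0. lra. Qed.

Lemma strict_conv_contra n Om p p' : is_open n Om -> smooth_uniformly_convex_boundary n Om ->
  inRn n p -> inRn n p' -> 0 < dot n (vsub p' p) (vsub p' p) ->
  (forall s, 0 <= s <= 1 -> clos n Om (vadd (vscale (1 - s) p) (vscale s p'))) ->
  boundary n Om (vadd (vscale (1 - / 2) p) (vscale (/ 2) p')) -> False.
Proof.
  intros Ho [c [Hc Hb]] HpR Hp'R Hdw Hcl Hmb.
  set (w := vsub p' p) in *. set (m := vadd (vscale (1 - / 2) p) (vscale (/ 2) p')) in *.
  assert (HwR : inRn n w) by (apply inRn_sub; auto).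
  assert (HmR : inRn n m) by apply Hmb.
  destruct (Hb m Hmb) as [r [D [Hr [Hsm [[i0 [Hi0 Hi0']] [Hiff Hcv]]]]]].
  assert (Hq : forall tau, vadd m (vscale tau w) = vadd (vscale (1 - (/2 + tau)) p) (vscale (/2 + tau) p')) by (intros; unfold m, w; vext).
  assert (Hcz : forall z, ball n m r z -> clos n Om z -> D nil z <= 0).
  { intros z Hz Hzc. destruct (Rle_lt_dec (D nil z) 0); auto. exfalso.
    destruct (proj1 (Hsm nil z Hz) (D nil z) r0) as [del [Hdel Hd]].
    destruct Hz as [HzR Hzd].
    destruct (Hzc (Rmin del (r - vdist n z m))) as [y [Hy Hyd]]. apply Rmin_pos; lra.
    pose proof (Rmin_l del (r - vdist n z m)). pose proof (Rmin_r del (r - vdist n z m)).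
    assert (HyR : inRn n y) by apply (Ho y Hy).
    assert (D nil y < 0). { apply Hiff; auto. split; auto. pose proof (vdist_triang n y z m). lra. }
    assert (Hby : ball n z del y) by (split; [auto|lra]). specialize (Hd y Hby). unfold Rabs in Hd; dcases; lra. }
  assert (HDm : D nil m = 0).
  { pose proof (proj1 (Hsm nil m (ball_self n m r HmR Hr))) as Hcont.
    destruct (Rtotal_order (D nil m) 0) as [Hlt|[Heq|Hgt]]; auto; exfalso.
    - destruct (Hcont (- D nil m) ltac:(lra)) as [del [Hdel Hd]].
      destruct Hmb as [_ Hmb]. destruct (Hmb (Rmin del r) ltac:(apply Rmin_pos; lra)) as [_ [y [HyR [Hny Hyd]]]].
      pose proof (Rmin_l del r). pose proof (Rmin_r del r).
      assert (~ D nil y < 0). { intro HH. apply Hny. apply Hiff; auto. split; auto; lra. }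
      assert (Hby : ball n m del y) by (split; [auto|lra]). specialize (Hd y Hby). unfold Rabs in Hd; dcases; lra.
    - destruct (Hcont (D nil m) ltac:(lra)) as [del [Hdel Hd]].
      destruct Hmb as [_ Hmb]. destruct (Hmb (Rmin del r) ltac:(apply Rmin_pos; lra)) as [[y [Hy Hyd]] _].
      pose proof (Rmin_l del r). pose proof (Rmin_r del r). assert (HyR : inRn n y) by apply (Ho y Hy).
      assert (D nil y < 0) by (apply Hiff; auto; split; auto; lra).
      assert (Hby : ball n m del y) by (split; [auto|lra]). specialize (Hd y Hby). unfold Rabs in Hd; dcases; lra. }
  set (nw := vnorm n w).
  assert (Hnw : 0 < nw) by (unfold nw, vnorm; apply sqrt_lt_R0; auto).
  set (tau0 := Rmin (/ 2) (r / (2 * (nw + 1)))).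
  assert (Ht0 : 0 < tau0) by (unfold tau0; apply Rmin_pos; [lra|apply Rdiv_lt_0_compat; lra]).
  assert (Ht0a : tau0 <= / 2) by apply Rmin_l.
  assert (Ht0b : tau0 * nw < r).
  { assert (tau0 <= r / (2 * (nw + 1))) by apply Rmin_r.
    apply Rle_lt_trans with (r / (2 * (nw + 1)) * (nw + 1)). nra.
    replace (r / (2 * (nw + 1)) * (nw + 1)) with (r / 2) by (field; lra). lra. }
  assert (Hball : forall tau, Rabs tau <= tau0 -> ball n m r (vadd m (vscale tau w))).
  { intros tau Htau. split. apply inRn_add; auto; apply inRn_scale; auto.
    unfold vdist. replace (vsub (vadd m (vscale tau w)) m) with (vscale tau w) by vext.
    rewrite vnorm_scale. fold nw. pose proof (Rabs_pos tau). nra. }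
  set (g := fun tau => D nil (vadd m (vscale tau w))).
  assert (Hg : forall tau, Rabs tau <= tau0 -> g tau <= 0).
  { intros tau Htau. apply Hcz. apply Hball; auto. rewrite Hq. apply Hcl.
    unfold Rabs in Htau; dcases; lra. }
  assert (Hg0 : g 0 = 0). { unfold g. replace (vadd m (vscale 0 w)) with m by vext. auto. }
  set (G := fun tau => sumR n (fun i => D [i] (vadd m (vscale tau w)) * w i)).
  assert (HgG : forall tau, Rabs tau <= tau0 -> derivable_pt_lim g tau (G tau)).
  { intros tau Htau. apply dshift. eapply derivable_pt_lim_ext.
    2: apply (dirderiv n m r D nil (vadd m (vscale tau w)) w Hsm (Hball tau Htau) HwR).
    intros s. unfold g. f_equal. vext. }
  set (Q := sumR n (fun i => sumR n (fun j => D (j :: [i]) m * w j) * w i)).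
  assert (HG : derivable_pt_lim G 0 Q).
  { unfold G, Q. apply (dsum n (fun i t => D [i] (vadd m (vscale t w)) * w i)). intros i Hi.
    eapply dval. apply (dmult (fun t => D [i] (vadd m (vscale t w))) (fun _ => w i)).
    apply (dirderiv n m r D [i] m w Hsm (ball_self n m r HmR Hr) HwR). apply dconst. ring. }
  assert (HG0 : G 0 = 0).
  { pose proof (HgG 0 ltac:(rewrite Rabs_R0; lra)) as Hd0.
    destruct (Rtotal_order (G 0) 0) as [Hlt|[Heq|Hgt]]; auto; exfalso.
    - destruct (Hd0 (- G 0 / 2) ltac:(lra)) as [del Hdel].
      set (h := - (Rmin del tau0 / 2)). assert (0 < Rmin del tau0) by (apply Rmin_pos; [apply cond_pos|lra]).
      pose proof (Rmin_l del tau0). pose proof (Rmin_r del tau0).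
      specialize (Hdel h ltac:(unfold h; lra) ltac:(unfold h; rewrite Rabs_Ropp, Rabs_right; lra)).
      rewrite Rplus_0_l, Hg0 in Hdel. specialize (Hg h ltac:(unfold h; rewrite Rabs_Ropp, Rabs_right; lra)).
      assert (Hq1 : (g h - 0) / h < G 0 / 2) by (unfold Rabs in Hdel; dcases; lra).
      assert (Hq2 : g h - 0 = (g h - 0) / h * h) by (field; unfold h; lra).
      assert (h < 0) by (unfold h; lra). clearbody h. nra.
    - destruct (Hd0 (G 0 / 2) ltac:(lra)) as [del Hdel].
      set (h := Rmin del tau0 / 2). assert (0 < Rmin del tau0) by (apply Rmin_pos; [apply cond_pos|lra]).
      pose proof (Rmin_l del tau0). pose proof (Rmin_r del tau0).
      specialize (Hdel h ltac:(unfold h; lra) ltac:(unfold h; rewrite Rabs_right; lra)).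
      rewrite Rplus_0_l, Hg0 in Hdel. specialize (Hg h ltac:(unfold h; rewrite Rabs_right; lra)).
      assert ((g h - 0) / h > G 0 / 2) by (unfold Rabs in Hdel; dcases; lra).
      assert (g h - 0 = (g h - 0) / h * h) by (field; unfold h; lra).
      assert (0 < h) by (unfold h; lra). clearbody h. nra. }
  assert (HQ : 0 < Q).
  { assert (Htan : sumR n (fun i => D [i] m * w i) = 0).
    { rewrite <- HG0. unfold G. replace (vadd m (vscale 0 w)) with m by vext. auto. }
    specialize (Hcv w HwR Htan).
    assert (Q = sumR n (fun i => sumR n (fun j => D [j; i] m * w i * w j))).
    { unfold Q. apply sumR_ext. intros i Hi. rewrite Rmult_comm, <- sumR_scal. apply sumR_ext; intros; ring. }
    assert (0 < vnorm n (fun i => D [i] m)).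
    { unfold vnorm. apply sqrt_lt_R0. unfold dot. apply (sumR_pos n _ i0); auto. intros; nra.
      assert (0 < Rsqr (D [i0] m)) by (apply Rlt_0_sqr; auto). unfold Rsqr in H0; lra. }
    assert (0 < c * vnorm n (fun i => D [i] m) * dot n w w) by (repeat apply Rmult_lt_0_compat; auto).
    lra. }
  destruct (HG (Q / 2) ltac:(lra)) as [del Hdel].
  set (t1 := Rmin del tau0 / 2). assert (0 < Rmin del tau0) by (apply Rmin_pos; [apply cond_pos|lra]).
  pose proof (Rmin_l del tau0). pose proof (Rmin_r del tau0).
  assert (Ht1 : 0 < t1 < Rmin del tau0) by (unfold t1; lra).
  destruct (MVT_cor2 g G 0 t1 ltac:(lra)) as [c0 [Hc1 Hc2]].
  { intros c' Hc'. apply HgG. unfold Rabs; dcases; lra. }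
  specialize (Hdel c0 ltac:(lra) ltac:(rewrite Rabs_right; lra)). rewrite Rplus_0_l, HG0 in Hdel.
  assert ((G c0 - 0) / c0 > Q / 2) by (unfold Rabs in Hdel; dcases; lra).
  assert (G c0 - 0 = (G c0 - 0) / c0 * c0) by (field; lra).
  assert (0 < G c0) by nra.
  specialize (Hg t1 ltac:(rewrite Rabs_right; lra)). rewrite Hg0 in Hc1. nra.
Qed.

Definition mid (x y : vec) : vec := vadd (vscale (1 - / 2) x) (vscale (/ 2) y).

Lemma bdry_near n Om rho x eps : dist_to_boundary n Om rho -> Om x -> rho x < eps ->
  exists z, boundary n Om z /\ vdist n x z < eps.
Proof. intros Hr Hx Hlt. apply Classical_Prop.NNPP. intro Hn. destruct (Hr x Hx) as [_ H2].
  assert (eps <= rho x). { apply H2. intros t [z [Hz ->]]. apply Rnot_lt_le. intro. apply Hn. exists z; auto. }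
  lra. Qed.

Lemma inv_mono a b : (a <= b)%nat -> / (INR b + 1) <= / (INR a + 1).
Proof. intros. apply Rinv_le_contravar. pose proof (pos_INR a); lra. apply le_INR in H. lra. Qed.

Lemma mid_bound n Om rho d : is_open n Om -> bounded_set n Om -> convex_set Om ->
  smooth_uniformly_convex_boundary n Om -> diameter n Om d -> dist_to_boundary n Om rho -> 0 < d ->
  exists del m0, 0 < del /\ 0 < m0 /\ forall x y, Om x -> Om y -> d - del <= vdist n y x -> m0 <= rho (mid x y).
Proof.
  intros Ho Hbd Hc Hsb Hd Hr Hd0.
  apply Classical_Prop.NNPP. intro Hno.
  assert (Hk : forall k, exists xy : vec * vec, Om (fst xy) /\ Om (snd xy) /\
     d - / (INR k + 1) <= vdist n (snd xy) (fst xy) /\ rho (mid (fst xy) (snd xy)) < / (INR k + 1)).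
  { intro k. apply Classical_Prop.NNPP. intro Hn. apply Hno. exists (/ (INR k + 1)), (/ (INR k + 1)).
    split; [apply inv_pos|split; [apply inv_pos|]]. intros x y Hx Hy Hxy. apply Rnot_lt_le. intro Hlt.
    apply Hn. exists (x, y). simpl; auto. }
  set (sq := fun k => proj1_sig (constructive_indefinite_description _ (Hk k))).
  assert (Hsq : forall k, Om (fst (sq k)) /\ Om (snd (sq k)) /\
     d - / (INR k + 1) <= vdist n (snd (sq k)) (fst (sq k)) /\ rho (mid (fst (sq k)) (snd (sq k))) < / (INR k + 1)).
  { intros k. unfold sq. destruct constructive_indefinite_description; simpl; auto. }
  set (xs := fun k => fst (sq k)). set (ys := fun k => snd (sq k)).
  destruct Hbd as [Mb HMb].
  assert (HBx : forall k i, (i < n)%nat -> Rabs (xs k i) <= Mb).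
  { intros. eapply Rle_trans. apply coord_le_norm; eauto. apply HMb. apply Hsq. }
  assert (HBy : forall k i, (i < n)%nat -> Rabs (ys k i) <= Mb).
  { intros. eapply Rle_trans. apply coord_le_norm; eauto. apply HMb. apply Hsq. }
  destruct (bwN n xs Mb HBx) as [phi1 [Lx [Hp1 HLx]]].
  destruct (bwN n (fun k => ys (phi1 k)) Mb (fun k => HBy (phi1 k))) as [phi2 [Ly [Hp2 HLy]]].
  set (idx := fun k => phi1 (phi2 k)).
  assert (Hidx : forall k, (k <= idx k)%nat).
  { apply mono_ge. intros k. unfold idx. apply mono_lt; auto. }
  set (X := fun k => xs (idx k)). set (Y := fun k => ys (idx k)).
  set (p := fun i => if Nat.ltb i n then Lx i else 0).
  set (p' := fun i => if Nat.ltb i n then Ly i else 0).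
  assert (HpR : inRn n p). { intros i Hi. unfold p. destruct (Nat.ltb_spec i n); auto; lia. }
  assert (Hp'R : inRn n p'). { intros i Hi. unfold p'. destruct (Nat.ltb_spec i n); auto; lia. }
  assert (HX : forall i, (i < n)%nat -> Un_cv (fun k => X k i) (p i)).
  { intros i Hi. unfold p. destruct (Nat.ltb_spec i n); [|lia]. unfold X, idx.
    apply (cv_sub (fun k => xs (phi1 k) i)). apply HLx; auto. apply mono_ge; auto. }
  assert (HY : forall i, (i < n)%nat -> Un_cv (fun k => Y k i) (p' i)).
  { intros i Hi. unfold p'. destruct (Nat.ltb_spec i n); [|lia]. unfold Y, idx. apply HLy; auto. }
  assert (HXO : forall k, Om (X k)) by (intros; apply Hsq).
  assert (HYO : forall k, Om (Y k)) by (intros; apply Hsq).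
  assert (HXY : forall k, d - / (INR k + 1) <= vdist n (Y k) (X k)).
  { intros k. pose proof (proj1 (proj2 (proj2 (Hsq (idx k))))). pose proof (inv_mono _ _ (Hidx k)). unfold X, Y, xs, ys. lra. }
  assert (Hrm : forall k, rho (mid (X k) (Y k)) < / (INR k + 1)).
  { intros k. pose proof (proj2 (proj2 (proj2 (Hsq (idx k))))). pose proof (inv_mono _ _ (Hidx k)). unfold X, Y, xs, ys. lra. }
  assert (Hcomb : forall s, forall i, (i < n)%nat -> Un_cv (fun k => vadd (vscale (1 - s) (X k)) (vscale s (Y k)) i)
     (vadd (vscale (1 - s) p) (vscale s p') i)).
  { intros s i Hi. unfold vadd, vscale. apply CV_plus; apply CV_mult; try apply cv_const; auto. }
  assert (Hcl : forall s, 0 <= s <= 1 -> clos n Om (vadd (vscale (1 - s) p) (vscale s p'))).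
  { intros s Hs eps Heps. destruct (cv_vdist n _ _ (Hcomb s) eps Heps) as [K HK].
    exists (vadd (vscale (1 - s) (X K)) (vscale s (Y K))). split. apply Hc; auto. apply HK; lia. }
  assert (Hw : 0 < dot n (vsub p' p) (vsub p' p)).
  { destruct (cv_vdist n X p HX (d / 6) ltac:(lra)) as [K1 HK1].
    destruct (cv_vdist n Y p' HY (d / 6) ltac:(lra)) as [K2 HK2].
    destruct (small_inv (d / 6) ltac:(lra)) as [K3 HK3].
    set (k := Nat.max K1 (Nat.max K2 K3)).
    specialize (HK1 k ltac:(lia)). specialize (HK2 k ltac:(lia)). specialize (HK3 k ltac:(lia)).
    specialize (HXY k).
    pose proof (vdist_triang n (Y k) p' (X k)). pose proof (vdist_triang n p' p (X k)).
    rewrite (vdist_sym n p (X k)) in H0.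
    assert (0 < vdist n p' p) by lra. unfold vdist, vnorm in H1.
    destruct (Req_dec (dot n (vsub p' p) (vsub p' p)) 0) as [He|He]. rewrite He, sqrt_0 in H1; lra.
    pose proof (dot_nonneg n (vsub p' p)). lra. }
  assert (Hmb : boundary n Om (vadd (vscale (1 - / 2) p) (vscale (/ 2) p'))).
  { split. apply inRn_add; apply inRn_scale; auto. intros r Hr0. split.
    - apply Hcl; lra.
    - destruct (cv_vdist n _ _ (Hcomb (/ 2)) (r / 2) ltac:(lra)) as [K1 HK1].
      destruct (small_inv (r / 4) ltac:(lra)) as [K2 HK2].
      set (k := Nat.max K1 K2). specialize (HK1 k ltac:(lia)). specialize (HK2 k ltac:(lia)). change (vdist n (vadd (vscale (1 - / 2) (X k)) (vscale (/ 2) (Y k))) (vadd (vscale (1 - / 2) p) (vscale (/ 2) p')) < r / 2) in HK1.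
      assert (HmO : Om (mid (X k) (Y k))) by (apply Hc; auto; lra).
      destruct (bdry_near n Om rho (mid (X k) (Y k)) (r / 4) Hr HmO) as [z [Hz Hzd]].
      specialize (Hrm k). lra.
      destruct Hz as [_ Hz]. destruct (Hz (r / 4) ltac:(lra)) as [_ [y [HyR [Hny Hyd]]]].
      exists y. split; auto. split; auto.
      pose proof (vdist_triang n y z (vadd (vscale (1 - / 2) p) (vscale (/ 2) p'))).
      pose proof (vdist_triang n z (mid (X k) (Y k)) (vadd (vscale (1 - / 2) p) (vscale (/ 2) p'))).
      rewrite (vdist_sym n z (mid (X k) (Y k))) in H0. unfold mid in *. lra. }
  apply (strict_conv_contra n Om p p' Ho Hsb HpR Hp'R Hw Hcl Hmb).
Qed.
Lemma key_small X rx ry kap al be : 0 < X -> 0 < rx -> 0 < ry -> 0 < kap ->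
  ry <= rx + X * (rx * al) -> rx <= ry + (- X) * (ry * be) -> kap * (be - al) <= 0.
Proof. intros HX Hx Hy Hk H1 H2.
  assert (X * (rx * al) >= ry - rx) by lra. assert (X * (ry * be) <= ry - rx) by lra.
  assert (X * rx * ry * al >= ry * (ry - rx)).
  { replace (X * rx * ry * al) with (ry * (X * (rx * al))) by ring. apply Rle_ge, Rmult_le_compat_l; lra. }
  assert (X * rx * ry * be <= rx * (ry - rx)).
  { replace (X * rx * ry * be) with (rx * (X * (ry * be))) by ring. apply Rmult_le_compat_l; lra. }
  assert (X * rx * ry * (be - al) <= 0).
  { pose proof (Rle_0_sqr (ry - rx)). unfold Rsqr in *. lra. }
  assert (0 < X * rx * ry) by (repeat apply Rmult_lt_0_compat; auto).
  assert (be - al <= 0). { destruct (Rle_lt_dec (be - al) 0); auto. nra. }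
  nra. Qed.

Lemma key_large X rx ry M m0 T kap al be : 0 < X -> 0 < rx -> 0 < ry -> 0 < m0 -> m0 <= M ->
  rx + ry <= T -> 0 < kap ->
  M <= rx + X / 2 * (rx * al) -> M <= ry + (- X / 2) * (ry * be) ->
  kap * (be - al) <= 2 * kap / X * (2 - 4 * m0 / T).
Proof. intros HX Hx Hy Hm HmM HT Hk H1 H2.
  assert (HT0 : 0 < T) by lra.
  assert (Hal : al >= 2 / X * (M / rx - 1)).
  { apply Rle_ge. apply Rmult_le_reg_r with (X / 2 * rx). apply Rmult_lt_0_compat; lra.
    replace (2 / X * (M / rx - 1) * (X / 2 * rx)) with (M - rx) by (field; lra). nra. }
  assert (Hbe : be <= 2 / X * (1 - M / ry)).
  { apply Rmult_le_reg_r with (X / 2 * ry). apply Rmult_lt_0_compat; lra.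
    replace (2 / X * (1 - M / ry) * (X / 2 * ry)) with (ry - M) by (field; lra). nra. }
  assert (Huv : 4 * m0 / T <= M / rx + M / ry).
  { assert (4 * m0 / T <= 4 * M / (rx + ry)).
    { apply Rle_trans with (4 * M / T). unfold Rdiv; apply Rmult_le_compat_r. left; apply Rinv_0_lt_compat; lra. lra.
      unfold Rdiv. apply Rmult_le_compat_l. lra. apply Rinv_le_contravar; lra. }
    assert (4 * M / (rx + ry) <= M / rx + M / ry).
    { assert (M / rx + M / ry - 4 * M / (rx + ry) = M * ((rx - ry) * (rx - ry)) / (rx * ry * (rx + ry))) by (field; lra).
      assert (0 <= M * ((rx - ry) * (rx - ry)) / (rx * ry * (rx + ry))).
      { unfold Rdiv. apply Rmult_le_pos. apply Rmult_le_pos. lra. apply Rle_0_sqr. left; apply Rinv_0_lt_compat. repeat apply Rmult_lt_0_compat; lra. }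
      lra. }
    lra. }
  assert (be - al <= 2 / X * (2 - (M / rx + M / ry))).
  { replace (2 / X * (2 - (M / rx + M / ry))) with (2 / X * (1 - M / ry) - 2 / X * (M / rx - 1)) by ring. lra. }
  assert (be - al <= 2 / X * (2 - 4 * m0 / T)).
  { eapply Rle_trans. apply H. apply Rmult_le_compat_l. left; apply Rdiv_lt_0_compat; lra. lra. }
  replace (2 * kap / X * (2 - 4 * m0 / T)) with (kap * (2 / X * (2 - 4 * m0 / T))) by (field; lra).
  apply Rmult_le_compat_l; lra. Qed.

Lemma key_final X d m0 : 0 < m0 -> d / 2 <= X < d ->
  2 * (d / (2 * m0)) / X * (2 - 4 * m0 / (d - X)) <= 4 / m0 - 4 / (d - X).
Proof. intros Hm HX. assert (0 < d) by lra. assert (0 < X) by lra. assert (0 < d - X) by lra.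
  replace (2 * (d / (2 * m0)) / X * (2 - 4 * m0 / (d - X))) with (2 * d / (m0 * X) - 4 * (d / X) / (d - X)) by (field; lra).
  assert (2 * d / (m0 * X) <= 4 / m0).
  { apply Rmult_le_reg_r with (m0 * X). apply Rmult_lt_0_compat; lra.
    replace (2 * d / (m0 * X) * (m0 * X)) with (2 * d) by (field; lra).
    replace (4 / m0 * (m0 * X)) with (4 * X) by (field; lra). lra. }
  assert (4 / (d - X) <= 4 * (d / X) / (d - X)).
  { unfold Rdiv. apply Rmult_le_compat_r. left; apply Rinv_0_lt_compat; lra.
    assert (1 <= d * / X). { apply Rmult_le_reg_r with X; auto. rewrite Rmult_assoc, Rinv_l by lra. lra. } lra. }
  lra. Qed.

Lemma sum_sq_zero n v : sumR n (fun i => v i * v i) = 0 -> forall i, (i < n)%nat -> v i = 0.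
Proof. intros H i Hi. destruct (Req_dec (v i) 0); auto. exfalso.
  assert (0 < sumR n (fun i => v i * v i)). apply (sumR_pos n _ i); auto. intros; nra.
  assert (0 < Rsqr (v i)) by (apply Rlt_0_sqr; auto). unfold Rsqr in H1; lra. lra. Qed.

Lemma pos_dist n x y : inRn n x -> inRn n y -> x <> y -> 0 < vdist n y x.
Proof. intros Hx Hy Hxy. unfold vdist, vnorm. apply sqrt_lt_R0.
  destruct (Rle_lt_dec (dot n (vsub y x) (vsub y x)) 0) as [Hle|]; auto. exfalso.
  assert (dot n (vsub y x) (vsub y x) = 0) by (pose proof (dot_nonneg n (vsub y x)); lra).
  apply Hxy. apply functional_extensionality; intro i. destruct (Nat.lt_ge_cases i n).
  pose proof (sum_sq_zero n (vsub y x) H i H0). unfold vsub in H1. lra.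
  rewrite Hx, Hy; auto. Qed.

Theorem propositionB2 (n : nat) (Om : vec -> Prop) (d : R) (rho : vec -> R)
  (Hopen : is_open n Om) (Hne : exists x, Om x) (Hbd : bounded_set n Om)
  (Hconv : convex_set Om) (Hbdry : smooth_uniformly_convex_boundary n Om)
  (Hd : diameter n Om d) (Hrho : dist_to_boundary n Om rho) :
  exists kappa, 0 < kappa /\
  forall (V phi dphi ddphi : R -> R) (lam : R),
    C1_on (- (d / 2)) (d / 2) V ->
    (forall s, - (d / 2) <= s <= d / 2 -> V (- s) = V s) ->
    dirichlet_eigenpair (d / 2) V lam phi dphi ddphi ->
    (forall s, - (d / 2) < s < d / 2 -> 0 < phi s) ->
    (forall lam' u du ddu, dirichlet_eigenpair (d / 2) V lam' u du ddu -> lam <= lam') ->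
    exists c0, forall (x y gx gy : vec),
      Om x -> Om y -> x <> y ->
      has_gradient n (fun z => ln (Rpower (rho z) kappa)) x gx ->
      has_gradient n (fun z => ln (Rpower (rho z) kappa)) y gy ->
      dot n (vsub gy gx) (vscale (/ vdist n y x) (vsub y x))
        <= Phi_of phi dphi (vdist n y x) + c0 * vdist n y x.
Proof.
  destruct (Rle_lt_dec d 0) as [Hdle|Hdpos].
  { exists 1. split. lra. intros V phi dphi ddphi lam _ _ _ _ _. exists 0.
    intros x y gx gy Hx Hy Hxy _ _. exfalso.
    pose proof (pos_dist n x y (proj1 (Hopen x Hx)) (proj1 (Hopen y Hy)) Hxy).
    pose proof (diam_le n Om d y x Hd Hy Hx). lra. }
  destruct (mid_bound n Om rho d Hopen Hbd Hconv Hbdry Hd Hrho Hdpos) as [del [m0 [Hdel [Hm0 Hmid]]]].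
  set (kap := d / (2 * m0)). assert (Hkap : 0 < kap) by (apply Rdiv_lt_0_compat; lra).
  exists kap. split; auto.
  intros V phi dphi ddphi lam HC1 Hev Heig Hpos _.
  set (a := d / 2).
  assert (HO : ODE a V lam phi dphi ddphi).
  { split. unfold a; lra. split. intros s Hs. destruct HC1 as [df Hdf].
    apply (deriv_within_cont _ _ _ _ (df s)). apply Hdf; auto. split; auto. }
  destruct (ode_near _ _ _ _ _ _ HO) as [eta [K [Heta HK]]].
  set (dp := Rmin del (Rmin (2 * eta) (d / 2))).
  assert (Hdp0 : 0 < dp) by (unfold dp; repeat apply Rmin_pos; lra).
  assert (Hdp1 : dp <= del) by apply Rmin_l.
  assert (Hdp2 : dp <= 2 * eta) by (eapply Rle_trans; [apply Rmin_r|apply Rmin_l]).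
  assert (Hdp3 : dp <= d / 2) by (eapply Rle_trans; [apply Rmin_r|apply Rmin_r]).
  destruct (ode_small _ _ _ _ _ _ HO (a - dp / 2) ltac:(unfold a; lra)) as [C HC].
  exists (Rabs C + 2 * (2 * Rabs K + 4 / m0) / d).
  intros x y gx gy Hx Hy Hxy Hgx Hgy.
  assert (HxR : inRn n x) by apply (Hopen x Hx). assert (HyR : inRn n y) by apply (Hopen y Hy).
  pose proof (pos_dist n x y HxR HyR Hxy) as HX.
  set (X := vdist n y x) in *.
  set (e := vscale (/ X) (vsub y x)).
  assert (HeR : inRn n e) by (apply inRn_scale, inRn_sub; auto).
  assert (He1 : vnorm n e = 1).
  { unfold e. rewrite vnorm_scale. rewrite Rabs_right by (apply Rle_ge, Rlt_le, Rinv_0_lt_compat; lra).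
    change (vnorm n (vsub y x)) with X. field; lra. }
  assert (Hyg : gam x e X = y) by (unfold gam, e; vext).
  assert (Hxg : gam y e (- X) = x) by (unfold gam, e; vext).
  assert (Hmx : gam x e (X / 2) = mid x y) by (unfold gam, e, mid; vext).
  assert (Hmy : gam y e (- X / 2) = mid x y) by (unfold gam, e, mid; vext).
  assert (HmO : Om (mid x y)) by (apply Hconv; auto; lra).
  pose proof (rho_pos n Om rho x Hopen Hrho Hx) as Hrx.
  pose proof (rho_pos n Om rho y Hopen Hrho Hy) as Hry.
  pose proof (tangent n Om rho kap x e gx (X / 2) Hopen Hconv Hrho Hkap Hx HeR He1 Hgx ltac:(rewrite Hmx; auto)) as T1.
  pose proof (tangent n Om rho kap y e gy (- X / 2) Hopen Hconv Hrho Hkap Hy HeR He1 Hgy ltac:(rewrite Hmy; auto)) as T2.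
  pose proof (tangent n Om rho kap x e gx X Hopen Hconv Hrho Hkap Hx HeR He1 Hgx ltac:(rewrite Hyg; auto)) as T3.
  pose proof (tangent n Om rho kap y e gy (- X) Hopen Hconv Hrho Hkap Hy HeR He1 Hgy ltac:(rewrite Hxg; auto)) as T4.
  rewrite Hmx in T1. rewrite Hmy in T2. rewrite Hyg in T3. rewrite Hxg in T4.
  pose proof (sum_rho n Om rho d x e X Hopen Hrho Hd Hx ltac:(rewrite Hyg; auto) HeR He1 ltac:(lra)) as Hsum.
  rewrite Hyg in Hsum.
  fold e. rewrite dot_sub_l.
  set (al := dot n gx e / kap) in *. set (be := dot n gy e / kap) in *.
  replace (dot n gy e - dot n gx e) with (kap * (be - al)) by (unfold al, be; field; lra).
  pose proof (key_small X (rho x) (rho y) kap al be HX Hrx Hry Hkap T3 T4) as Hneg.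
  unfold Phi_of.
  assert (Hc0 : 0 <= Rabs C * X) by (pose proof (Rabs_pos C); nra).
  assert (Hc1 : 0 <= 2 * (2 * Rabs K + 4 / m0) / d * X).
  { pose proof (Rabs_pos K). assert (0 < 4 / m0) by (apply Rdiv_lt_0_compat; lra).
    apply Rmult_le_pos; [|lra]. unfold Rdiv; apply Rmult_le_pos; [lra|left; apply Rinv_0_lt_compat; lra]. }
  destruct (Rlt_le_dec X (d - dp)) as [Hsm|Hlg].
  - specialize (HC (X / 2) ltac:(unfold a; lra)).
    assert (- C * (X / 2) >= - (Rabs C) * (X / 2)).
    { pose proof (Rle_abs C). apply Rle_ge. apply Rmult_le_compat_r; lra. }
    lra.
  - assert (HM : m0 <= rho (mid x y)) by (apply Hmid; auto; change (vdist n y x) with X; lra).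
    assert (HXd : X < d) by lra.
    pose proof (key_large X (rho x) (rho y) (rho (mid x y)) m0 (d - X) kap al be HX Hrx Hry Hm0 HM ltac:(lra) Hkap T1 T2) as HL.
    pose proof (key_final X d m0 Hm0 ltac:(lra)) as HF. fold kap in HF.
    specialize (HK (X / 2) ltac:(unfold a; lra)).
    replace (- / (a - X / 2)) with (- 2 / (d - X)) in HK by (unfold a; field; lra).
    assert (2 * (2 * Rabs K + 4 / m0) / d * X >= 2 * Rabs K + 4 / m0).
    { pose proof (Rabs_pos K). assert (0 < 4 / m0) by (apply Rdiv_lt_0_compat; lra).
      apply Rle_ge. apply Rle_trans with (2 * (2 * Rabs K + 4 / m0) / d * (d / 2)).
      right; field; lra. apply Rmult_le_compat_l. unfold Rdiv; apply Rmult_le_pos; [lra|left; apply Rinv_0_lt_compat; lra]. lra. }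
    pose proof (Rle_abs K).
    assert (- 4 / (d - X) = 2 * (- 2 / (d - X))) by (field; lra).
    lra.
Qed.
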